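(* Let $\mathfrak{T}$ be a triangulation of the strip. Then $t=\Phi(\mathfrak{T})$ is well defined (independent of the choice of the arcs $(p^\circ,q_\circ),(r^\circ,s_\circ)$ in its definition), it is an $\mathrm{SL}_2$-tiling with enough ones, and for all $i,j\in\mathbb{Z}$ we have $t_{ij}=1$ if and only if $(i^\circ,j_\circ)\in\mathfrak{T}$.
   Context: Vertices of the strip: two disjoint copies of $\mathbb{Z}$, written $\mathbb{Z}^\circ=\{p^\circ: p\in\mathbb{Z}\}$ (upper edge) and $\mathbb{Z}_\circ=\{q_\circ : q\in\mathbb{Z}\}$ (lower edge). Geometrically, $p^\circ$ is the point $(-p,1)$ and $q_\circ$ is the point $(q,-1)$ of the strip $\mathbb{R}\times[-1,1]$. A connecting arc is a pair $(p^\circ,q_\circ)$ with $p,q\in\mathbb{Z}$; an internal arc is a pair $(p^\circ,q^\circ)$ or $(p_\circ,q_\circ)$ with $p\le q-2$. Two distinct arcs cross exactly in the following cases: connecting arcs $(p^\circ,q_\circ),(p'^\circ,q'_\circ)$ cross iff $(p-p')(q-q')>0$; internal arcs $(a^\circ,b^\circ),(c^\circ,d^\circ)$ cross iff $a<c<b<d$ or $c<a<d<b$ (same for lower internal arcs); $(a^\circ,b^\circ)$ crosses $(p^\circ,q_\circ)$ iff $a<p<b$, and $(a_\circ,b_\circ)$ crosses $(p^\circ,q_\circ)$ iff $a<q<b$; upper and lower internal arcs never cross. A triangulation of the strip is a maximal set $\mathfrak{T}$ of pairwise non-crossing arcs such that for every $(i,j)\in\mathbb{Z}^2$ there is $(p^\circ,q_\circ)\in\mathfrak{T}$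 with $p<i,\ q>j$, and there is $(p^\circ,q_\circ)\in\mathfrak{T}$ with $p>i,\ q<j$. An $\mathrm{SL}_2$-tiling is a map $t:\mathbb{Z}\times\mathbb{Z}\to\{1,2,3,\dots\}$, $(i,j)\mapsto t_{ij}$, with $t_{ij}t_{i+1,j+1}-t_{i,j+1}t_{i+1,j}=1$ for all $i,j$. It has enough ones if for every $(i,j)$ there is $(p,q)$ with $p<i,\ q>j$ and $t_{pq}=1$, and there is $(p,q)$ with $p>i,\ q<j$ and $t_{pq}=1$. Friese numbers of a triangulated polygon: for a convex polygon with vertices $v_0,\dots,v_n$ in cyclic order and a triangulation $\mathcal{X}$, let $a_l$ be the number of triangles incident with $v_l$; for fixed $k$ define $m_k(k)=0$, $m_k(k+1)=1$, $m_k(l+1)=a_lm_k(l)-m_k(l-1)$ (indices mod $n+1$, $l$ running from $k$ to $k+n$) and set $\mathcal{X}(v_k,v_l)=m_k(l)$. $\Phi(\mathfrak{T})$: for $(i,j)$ choose $(p^\circ,q_\circ),(r^\circ,s_\circ)\in\mathfrak{T}$ with $p<i<r$, $s<j<q$; let $P$ be the polygon with vertices in cyclic order $p^\circ,\dots,r^\circ,s_\circ,\dots,q_\circ$, and $\mathfrak{T}_P$ the triangulation of $P$ formed by the arcs of $\mathfrak{T}$ that are diagonals of $P$; set $\Phi(\mathfrak{T})_{ij}=\mathfrak{T}_P(i^\circ,j_\circ)$. *)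

(* Defs.v *)
From Stdlib Require Import ZArith List Lia Bool.
Import ListNotations.
Open Scope Z_scope.

(** Vertices of the strip: [U p] is p° = (-p,1), [L q] is q_∘ = (q,-1). *)
Inductive vtx : Type := U (p : Z) | L (q : Z).

(** Arcs: [Conn p q] = (p°, q_∘); [Up a b] = (a°, b°); [Low a b] = (a_∘, b_∘). *)
Inductive arc : Type := Conn (p q : Z) | Up (a b : Z) | Low (a b : Z).

Definition valid_arc (x : arc) : Prop :=
  match x with
  | Conn _ _ => True
  | Up a b => a <= b - 2
  | Low a b => a <= b - 2
  end.

Definition crosses (x y : arc) : Prop :=
  match x, y with
  | Conn p q, Conn p' q' => (p - p') * (q - q') > 0
  | Up a b, Up c d => (a < c < b /\ b < d) \/ (c < a < d /\ d < b)
  | Low a b, Low c d => (a < c < b /\ b < d) \/ (c < a < d /\ d < b)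
  | Up a b, Conn p _ => a < p < b
  | Conn p _, Up a b => a < p < b
  | Low a b, Conn _ q => a < q < b
  | Conn _ q, Low a b => a < q < b
  | _, _ => False
  end.

Definition arcset := arc -> bool.

Definition triangulation (T : arcset) : Prop :=
  (forall x, T x = true -> valid_arc x) /\
  (forall x y, T x = true -> T y = true -> x <> y -> ~ crosses x y) /\
  (forall x, valid_arc x -> T x = false -> exists y, T y = true /\ x <> y /\ crosses x y) /\
  (forall i j : Z,
      (exists p q, T (Conn p q) = true /\ p < i /\ q > j) /\
      (exists p q, T (Conn p q) = true /\ p > i /\ q < j)).

Definition SL2_tiling (t : Z -> Z -> Z) : Prop :=
  (forall i j, 1 <= t i j) /\
  (forall i j, t i j * t (i+1) (j+1) - t i (j+1) * t (i+1) j = 1).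

Definition enough_ones (t : Z -> Z -> Z) : Prop :=
  forall i j : Z,
    (exists p q, p < i /\ q > j /\ t p q = 1) /\
    (exists p q, p > i /\ q < j /\ t p q = 1).

(** The polygon has vertices v_0, ..., v_(N-1) (N = n+1); [E k l] says that
    v_k and v_l are joined by a side of the polygon or a diagonal of the
    triangulation. *)

Definition tri_count (N : nat) (E : nat -> nat -> bool) (l : nat) : nat :=
  length (filter (fun yz : nat * nat =>
            let (y, z) := yz in
            Nat.ltb y z && negb (Nat.eqb y l) && negb (Nat.eqb z l)
            && E l y && E l z && E y z)
          (list_prod (seq 0 N) (seq 0 N))).

(** Pairs (m_k(k+d), m_k(k+d+1)) with m_k(k)=0, m_k(k+1)=1,
    m_k(l+1) = a_l m_k(l) - m_k(l-1), indices mod N. *)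
Fixpoint frz (N : nat) (a : nat -> Z) (k : nat) (d : nat) : Z * Z :=
  match d with
  | O => (0, 1)
  | S d' => let (x, y) := frz N a k d' in
            (y, a (Nat.modulo (k + d' + 1) N) * y - x)
  end.

Definition friese (N : nat) (E : nat -> nat -> bool) (k l : nat) : Z :=
  fst (frz N (fun l => Z.of_nat (tri_count N E l)) k (Nat.modulo (l + N - k) N)).

Definition arc_of (v w : vtx) : option arc :=
  match v, w with
  | U a, U b => if a <? b then Some (Up a b) else if b <? a then Some (Up b a) else None
  | L a, L b => if a <? b then Some (Low a b) else if b <? a then Some (Low b a) else None
  | U p, L q => Some (Conn p q)
  | L q, U p => Some (Conn p q)
  end.

Definition joined_in (T : arcset) (v w : vtx) : bool :=
  match arc_of v w with Some x => T x | None => false end.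

Definition zrange (a b : Z) : list Z :=
  map (fun n => a + Z.of_nat n) (seq 0 (Z.to_nat (b - a + 1))).

(** Polygon with vertices p°, ..., r°, s_∘, ..., q_∘ in cyclic order. *)
Definition strip_poly (p q r s : Z) : list vtx :=
  map U (zrange p r) ++ map L (zrange s q).

(** Sides of the polygon, or arcs of T joining two of its vertices
    (the latter being the diagonals of P in T, i.e. T_P, when not sides). *)
Definition poly_E (T : arcset) (P : list vtx) (k l : nat) : bool :=
  let N := length P in
  Nat.eqb l (Nat.modulo (k + 1) N) || Nat.eqb k (Nat.modulo (l + 1) N)
  || joined_in T (nth k P (U 0)) (nth l P (U 0)).

(** T_P(i°, j_∘) for the polygon determined by (p°,q_∘), (r°,s_∘). *)
Definition Phi_val (T : arcset) (p q r s i j : Z) : Z :=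
  let P := strip_poly p q r s in
  friese (length P) (poly_E T P) (Z.to_nat (i - p)) (Z.to_nat (r - p + 1 + (j - s))).

Definition admissible (T : arcset) (p q r s i j : Z) : Prop :=
  T (Conn p q) = true /\ T (Conn r s) = true /\ p < i < r /\ s < j < q.

(* Main.v *)
Require Import Defs.
From Stdlib Require Import ZArith List Lia Bool Arith.
From Stdlib Require Import ClassicalEpsilon.
Import ListNotations.
Open Scope Z_scope.

Record mat := mk { m00 : Z; m01 : Z; m10 : Z; m11 : Z }.
Definition mmul (A B : mat) : mat :=
  mk (m00 A * m00 B + m01 A * m10 B) (m00 A * m01 B + m01 A * m11 B)
     (m10 A * m00 B + m11 A * m10 B) (m10 A * m01 B + m11 A * m11 B).
Definition Id2 := mk 1 0 0 1.
Definition Mq (c : Z) := mk c (-1) 1 0.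
Definition det (A : mat) := m00 A * m11 A - m01 A * m10 A.

Lemma mat_eq : forall A B, m00 A = m00 B -> m01 A = m01 B -> m10 A = m10 B -> m11 A = m11 B -> A = B.
Proof. intros [] [] ; simpl; intros; subst; reflexivity. Qed.

Lemma mmul_assoc : forall A B C, mmul A (mmul B C) = mmul (mmul A B) C.
Proof. intros [] [] []; apply mat_eq; unfold mmul; cbn [m00 m01 m10 m11]; ring. Qed.
Lemma mmul_I_l : forall A, mmul Id2 A = A.
Proof. intros []; apply mat_eq; unfold mmul, Id2; cbn [m00 m01 m10 m11]; ring. Qed.
Lemma mmul_I_r : forall A, mmul A Id2 = A.
Proof. intros []; apply mat_eq; unfold mmul, Id2; cbn [m00 m01 m10 m11]; ring. Qed.
Lemma det_mul : forall A B, det (mmul A B) = det A * det B.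
Proof. intros [] []; unfold det, mmul; cbn [m00 m01 m10 m11]; ring. Qed.
Lemma det_Mq : forall c, det (Mq c) = 1.
Proof. intros; unfold det, Mq; cbn [m00 m01 m10 m11]; ring. Qed.

Lemma tri_id : forall X Y, mmul (mmul (Mq (X+1)) (Mq 1)) (Mq (Y+1)) = mmul (Mq X) (Mq Y).
Proof. intros; apply mat_eq; unfold mmul, Mq; cbn [m00 m01 m10 m11]; ring. Qed.

Lemma inv_lemma : forall x y B C, det B = 1 ->
  mmul (mmul (mmul (Mq x) B) (Mq y)) C = mk (-1) 0 0 (-1) -> m00 C = m00 B.
Proof.
  intros x y B C Hd H.
  set (K := mmul (mmul (Mq x) B) (Mq y)) in *.
  assert (HK : det K = 1) by (unfold K; rewrite !det_mul, !det_Mq, Hd; ring).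
  assert (HK11 : m11 K = - m00 B).
  { unfold K; destruct B; unfold mmul, Mq; cbn [m00 m01 m10 m11]; ring. }
  destruct K as [k0 k1 k2 k3], C as [e f g h]; unfold det, mmul in *; cbn [m00 m01 m10 m11] in *.
  injection H; intros H4 H3 H2 H1.
  assert (E : e * (k0 * k3 - k1 * k2) = k3 * (k0 * e + k1 * g) - k1 * (k2 * e + k3 * g)) by ring.
  rewrite HK, H1, H3 in E. lia.
Qed.

Fixpoint PrV {A} (f : A -> Z) (l : list A) : mat :=
  match l with
  | [] => Id2
  | v :: l' => mmul (PrV f l') (Mq (f v))
  end.

Lemma PrV_app : forall A (f : A -> Z) l1 l2, PrV f (l1 ++ l2) = mmul (PrV f l2) (PrV f l1).
Proof.
  intros A f l1; induction l1; intros; simpl.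
  - rewrite mmul_I_r; auto.
  - rewrite IHl1, mmul_assoc; auto.
Qed.

Lemma PrV_ext : forall A (f g : A -> Z) l, (forall x, In x l -> f x = g x) -> PrV f l = PrV g l.
Proof.
  intros A f g l; induction l; intros H; simpl; auto.
  rewrite IHl, (H a); [auto | simpl; auto | intros; apply H; simpl; auto].
Qed.

Lemma det_PrV : forall A (f : A -> Z) l, det (PrV f l) = 1.
Proof.
  intros A f l; induction l; simpl; auto.
  rewrite det_mul, IHl, det_Mq; auto.
Qed.

Definition vlt (v w : vtx) : bool :=
  match v, w with
  | U a, U b => a <? b
  | U _, L _ => true
  | L _, U _ => false
  | L a, L b => a <? b
  end.
Definition veqb (v w : vtx) : bool :=
  match v, w with
  | U a, U b => a =? b
  | L a, L b => a =? b
  | _, _ => false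
  end.
Lemma veqb_spec : forall v w, veqb v w = true <-> v = w.
Proof.
  intros [a|a] [b|b]; simpl; split; intros H; try discriminate;
  try (apply Z.eqb_eq in H; subst; auto); try (injection H; intros; subst; apply Z.eqb_refl).
Qed.
Lemma veqb_false : forall v w, veqb v w = false <-> v <> w.
Proof.
  intros v w; rewrite <- not_true_iff_false, veqb_spec; tauto.
Qed.
Lemma vtx_dec : forall v w : vtx, {v = w} + {v <> w}.
Proof. decide equality; apply Z.eq_dec. Qed.
Lemma vlt_irrefl : forall v, vlt v v = false.
Proof. intros [a|a]; simpl; apply Z.ltb_irrefl. Qed.
Lemma vlt_asym : forall v w, vlt v w = true -> vlt w v = false.
Proof. intros [a|a] [b|b]; simpl; intros H; auto; try discriminate;
  apply Z.ltb_lt in H; apply Z.ltb_ge; lia. Qed.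
Lemma vlt_total : forall v w, v <> w -> vlt v w = true \/ vlt w v = true.
Proof. intros [a|a] [b|b] H; simpl; auto;
  (destruct (Z.lt_trichotomy a b) as [h|[h|h]]; [left; apply Z.ltb_lt; auto | subst; tauto | right; apply Z.ltb_lt; auto]).
Qed.

Definition tp (J : vtx -> vtx -> bool) (v : vtx) (yz : vtx * vtx) : bool :=
  let (y, z) := yz in
  vlt y z && negb (veqb y v) && negb (veqb z v) && J v y && J v z && J y z.
Definition cnt (J : vtx -> vtx -> bool) (V : list vtx) (v : vtx) : nat :=
  length (filter (tp J v) (list_prod V V)).

Lemma tp_true : forall J v y z, tp J v (y, z) = true <->
  vlt y z = true /\ y <> v /\ z <> v /\ J v y = true /\ J v z = true /\ J y z = true.
Proof.
  intros; unfold tp; rewrite !andb_true_iff, !negb_true_iff, !veqb_false; tauto.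
Qed.

Lemma NoDup_list_prod : forall (A B : Type) (l : list A) (l' : list B),
  NoDup l -> NoDup l' -> NoDup (list_prod l l').
Proof.
  intros A B l l' H H'; induction H; simpl; [constructor|].
  apply NoDup_app; auto.
  - apply NoDup_map_NoDup_ForallPairs; auto. intros a b _ _ E; injection E; auto.
  - intros [a b] Ha Hb. apply in_map_iff in Ha. destruct Ha as [c [Ec _]]; injection Ec; intros; subst.
    apply in_prod_iff in Hb; tauto.
Qed.

Lemma len_eq_in : forall (A : Type) (l1 l2 : list A), NoDup l1 -> NoDup l2 ->
  (forall x, In x l1 <-> In x l2) -> length l1 = length l2.
Proof.
  intros A l1 l2 H1 H2 H.
  apply Nat.le_antisymm; apply NoDup_incl_length; auto; intros x; apply H.
Qed.

Lemma cnt3 : forall J V W1 W2 W3 v, NoDup V -> NoDup W1 -> NoDup W2 -> NoDup W3 ->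
  incl W1 V -> incl W2 V -> incl W3 V ->
  (forall y z, In y V -> In z V -> tp J v (y, z) = true ->
     (In y W1 /\ In z W1) \/ (In y W2 /\ In z W2) \/ (In y W3 /\ In z W3)) ->
  (forall y z, tp J v (y, z) = true -> In y W1 -> In z W1 -> In y W2 -> In z W2 -> False) ->
  (forall y z, tp J v (y, z) = true -> In y W1 -> In z W1 -> In y W3 -> In z W3 -> False) ->
  (forall y z, tp J v (y, z) = true -> In y W2 -> In z W2 -> In y W3 -> In z W3 -> False) ->
  (cnt J V v = cnt J W1 v + cnt J W2 v + cnt J W3 v)%nat.
Proof.
  intros J V W1 W2 W3 v HV H1 H2 H3 I1 I2 I3 Hc D12 D13 D23.
  unfold cnt. rewrite <- !length_app.
  apply len_eq_in.
  - apply NoDup_filter, NoDup_list_prod; auto.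
  - repeat apply NoDup_app; try (apply NoDup_filter, NoDup_list_prod; auto);
    intros [y z] Ha Hb; try apply in_app_iff in Hb; try apply in_app_iff in Ha;
    repeat match goal with
    | H : In _ (filter _ _) |- _ => apply filter_In in H; destruct H as [H ?]; apply in_prod_iff in H
    | H : _ \/ _ |- _ => destruct H
    | H : _ /\ _ |- _ => destruct H
    end;
    first [eapply D12; eauto; tauto | eapply D13; eauto; tauto | eapply D23; eauto; tauto].
  - intros [y z]. rewrite !in_app_iff, !filter_In, !in_prod_iff. split.
    + intros [[Hy Hz] Ht]. destruct (Hc y z Hy Hz Ht) as [[? ?]|[[? ?]|[? ?]]]; tauto.
    + intros [[[[? ?] Ht]|[[? ?] Ht]]|[[? ?] Ht]]; split; auto.
Qed.

Lemma cnt_nil : forall J v, cnt J [] v = 0%nat.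
Proof. reflexivity. Qed.

Lemma cnt_sub : forall J V W v, NoDup V -> NoDup W -> incl W V ->
  (forall y z, In y V -> In z V -> tp J v (y, z) = true -> In y W /\ In z W) ->
  cnt J V v = cnt J W v.
Proof.
  intros J V W v H H0 H1 H2. rewrite (cnt3 J V W [] [] v); [rewrite !cnt_nil; lia|..];
  auto; try apply NoDup_nil; try apply incl_nil_l; intros; simpl in *; try tauto.
Qed.

Lemma cnt2 : forall J V W1 W2 v, NoDup V -> NoDup W1 -> NoDup W2 ->
  incl W1 V -> incl W2 V ->
  (forall y z, In y V -> In z V -> tp J v (y, z) = true ->
     (In y W1 /\ In z W1) \/ (In y W2 /\ In z W2)) ->
  (forall y z, tp J v (y, z) = true -> In y W1 -> In z W1 -> In y W2 -> In z W2 -> False) ->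
  (cnt J V v = cnt J W1 v + cnt J W2 v)%nat.
Proof.
  intros J V W1 W2 v H H0 H1 H2 H3 H4 H5. rewrite (cnt3 J V W1 W2 [] v); [rewrite !cnt_nil; lia|..];
  auto; try apply NoDup_nil; try apply incl_nil_l; intros; simpl in *; try tauto.
  all: destruct (H4 y z); auto.
Qed.

Lemma cnt_perm : forall J V W v, NoDup V -> NoDup W -> (forall x, In x V <-> In x W) ->
  cnt J V v = cnt J W v.
Proof.
  intros. apply cnt_sub; auto. intros x; apply H1. intros y z Hy Hz _; split; apply H1; auto.
Qed.

Lemma tri3 : forall J x y z, (forall a b, J a b = J b a) ->
  x <> y -> x <> z -> y <> z -> J x y = true -> J x z = true -> J y z = true ->
  cnt J [x; y; z] x = 1%nat.
Proof.
  intros J x y z JS Hxy Hxz Hyz Jxy Jxz Jyz.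
  unfold cnt.
  destruct (vlt_total y z Hyz) as [L|L].
  - change 1%nat with (length [(y, z)]).
    apply len_eq_in.
    + apply NoDup_filter, NoDup_list_prod; repeat constructor; simpl; intuition.
    + repeat constructor; simpl; auto.
    + intros [a b]; rewrite filter_In, in_prod_iff, tp_true; simpl; split.
      * intros [[Ha Hb] [H1 [H2 [H3 _]]]].
        destruct Ha as [Ha|[Ha|[Ha|[]]]]; destruct Hb as [Hb|[Hb|[Hb|[]]]]; subst; try tauto;
        try (rewrite vlt_irrefl in H1; discriminate).
        rewrite vlt_asym in H1; auto; discriminate.
      * intros [E|[]]; injection E; intros; subst. intuition.
  - change 1%nat with (length [(z, y)]).
    apply len_eq_in.
    + apply NoDup_filter, NoDup_list_prod; repeat constructor; simpl; intuition.
    + repeat constructor; simpl; auto.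
    + intros [a b]; rewrite filter_In, in_prod_iff, tp_true; simpl; split.
      * intros [[Ha Hb] [H1 [H2 [H3 _]]]].
        destruct Ha as [Ha|[Ha|[Ha|[]]]]; destruct Hb as [Hb|[Hb|[Hb|[]]]]; subst; try tauto;
        try (rewrite vlt_irrefl in H1; discriminate).
        rewrite vlt_asym in H1; auto; discriminate.
      * intros [E|[]]; injection E; intros; subst. rewrite JS in Jyz. intuition.
Qed.

Definition nthv (V : list vtx) (k : nat) : vtx := nth k V (U 0).
Definition sub (V : list vtx) (x y : nat) : list vtx := map (nthv V) (seq x (y - x)).

Definition Tri (J : vtx -> vtx -> bool) (V : list vtx) : Prop :=
  (2 <= length V)%nat /\ NoDup V /\
  (forall k, (S k < length V)%nat -> J (nthv V k) (nthv V (S k)) = true) /\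
  J (nthv V 0) (nthv V (length V - 1)) = true /\
  (forall a b c d, (a < b < c)%nat -> (c < d < length V)%nat ->
      J (nthv V a) (nthv V c) = true -> J (nthv V b) (nthv V d) = true -> False) /\
  (forall a c, (a < c < length V)%nat -> J (nthv V a) (nthv V c) = false ->
      exists b d, (d < length V)%nat /\ (a < b < c)%nat /\ (d < a \/ c < d)%nat /\
                  J (nthv V b) (nthv V d) = true).

Definition cz J V (v : vtx) : Z := Z.of_nat (cnt J V v).
Definition interior (V : list vtx) := sub V 1 (length V - 1).
Definition Gp J V := forall X Y,
  mmul (mmul (Mq (X + cz J V (nthv V (length V - 1)))) (PrV (cz J V) (interior V)))
       (Mq (Y + cz J V (nthv V 0))) = mmul (Mq X) (Mq Y).
Definition F J V (i j : nat) : Z := m00 (PrV (cz J V) (sub V (S i) j)).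
Definition Fz J V (i j : nat) : Z := if (i <? j)%nat then F J V i j else 0.

Lemma nthv_In : forall V k, (k < length V)%nat -> In (nthv V k) V.
Proof. intros; apply nth_In; auto. Qed.
Lemma In_nthv : forall V y, In y V -> exists k, (k < length V)%nat /\ nthv V k = y.
Proof. intros; apply In_nth; auto. Qed.
Lemma nthv_inj : forall V i j, NoDup V -> (i < length V)%nat -> (j < length V)%nat ->
  nthv V i = nthv V j -> i = j.
Proof. intros V i j H; rewrite NoDup_nth in H; apply H. Qed.

Lemma nthv_firstn : forall V m k, (k < m)%nat -> nthv (firstn m V) k = nthv V k.
Proof. intros; unfold nthv; rewrite nth_firstn. replace (k <? m)%nat with true; auto.
  symmetry; apply Nat.ltb_lt; auto. Qed.
Lemma nthv_skipn : forall V m k, nthv (skipn m V) k = nthv V (m + k).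
Proof. intros; unfold nthv; rewrite nth_skipn; auto. Qed.

Lemma sub_split : forall V x m y, (x <= m)%nat -> (m < y)%nat ->
  sub V x y = sub V x m ++ nthv V m :: sub V (S m) y.
Proof.
  intros. unfold sub. replace (y - x)%nat with ((m - x) + S (y - S m))%nat by lia.
  rewrite seq_app, map_app. simpl. replace (x + (m - x))%nat with m by lia. auto.
Qed.

Lemma map_ext_seq : forall (f g : nat -> vtx) s n, (forall k, (s <= k < s + n)%nat -> f k = g k) ->
  map f (seq s n) = map g (seq s n).
Proof.
  intros f g s n; revert s; induction n; intros s H; simpl; auto.
  rewrite H by lia. rewrite IHn; auto. intros; apply H; lia.
Qed.

Lemma map_seq_shift : forall (f : nat -> vtx) w s n,
  map (fun k => f (w + k)%nat) (seq s n) = map f (seq (w + s) n).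
Proof.
  intros f w s n; revert s; induction n; intros s; simpl; auto.
  rewrite IHn. replace (w + S s)%nat with (S (w + s)) by lia. auto.
Qed.

Lemma sub_firstn : forall V m x y, (y <= m)%nat -> sub (firstn m V) x y = sub V x y.
Proof.
  intros; unfold sub; apply map_ext_seq; intros; apply nthv_firstn; lia.
Qed.
Lemma sub_skipn : forall V w x y, sub (skipn w V) x y = sub V (w + x) (w + y).
Proof.
  intros; unfold sub. replace (w + y - (w + x))%nat with (y - x)%nat by lia.
  rewrite <- map_seq_shift. apply map_ext_seq; intros; apply nthv_skipn.
Qed.
Lemma In_sub : forall V x y v, In v (sub V x y) -> exists k, (x <= k < y)%nat /\ v = nthv V k.
Proof.
  intros V x y v H; unfold sub in H; apply in_map_iff in H. destruct H as [k [E Hk]].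
  apply in_seq in Hk. exists k; split; auto; lia.
Qed.

Lemma length_firstn_le : forall (V : list vtx) m, (m <= length V)%nat -> length (firstn m V) = m.
Proof. intros; apply firstn_length_le; auto. Qed.

Lemma NoDup_firstn' : forall (V : list vtx) m, NoDup V -> NoDup (firstn m V).
Proof. intros V m H. rewrite <- (firstn_skipn m V) in H. eapply NoDup_app_remove_r; eauto. Qed.
Lemma NoDup_skipn' : forall (V : list vtx) m, NoDup V -> NoDup (skipn m V).
Proof. intros V m H. rewrite <- (firstn_skipn m V) in H. eapply NoDup_app_remove_l; eauto. Qed.

Lemma max_search : forall (P : nat -> bool) n, P 1%nat = true -> (1 < n)%nat ->
  exists w, (1 <= w < n)%nat /\ P w = true /\ forall u, (w < u < n)%nat -> P u = false.
Proof.
  intros P n H1; induction n; intros Hn; [lia|].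
  destruct (Nat.eq_dec n 1) as [->|Hn1].
  - exists 1%nat; split; [lia|split; auto]. intros; lia.
  - destruct (P n) eqn:Pn.
    + exists n; split; [lia|split; auto]. intros; lia.
    + destruct IHn as [w [Hw1 [Hw2 Hw3]]]; [lia|].
      exists w; split; [lia|split; auto]. intros u Hu.
      destruct (Nat.eq_dec u n); [subst; auto|]. apply Hw3; lia.
Qed.


Definition Jsym (J : vtx -> vtx -> bool) := forall a b, J a b = J b a.

Lemma apex : forall J V, Jsym J -> Tri J V -> (3 <= length V)%nat ->
  exists w, (0 < w < length V - 1)%nat /\ J (nthv V 0) (nthv V w) = true /\
            J (nthv V w) (nthv V (length V - 1)) = true.
Proof.
  intros J V JS [H2 [HN [Hc [H0n [Hnc Hmax]]]]] H3.
  set (n := (length V - 1)%nat) in *.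
  destruct (max_search (fun u => J (nthv V 0) (nthv V u)) n) as [w [Hw [Jw Hwm]]].
  - apply (Hc 0%nat); lia.
  - lia.
  - exists w; split; [lia|split; auto].
    destruct (J (nthv V w) (nthv V n)) eqn:E; auto.
    exfalso.
    destruct (Nat.eq_dec (S w) n) as [e|ne].
    + rewrite <- e in E. rewrite Hc in E; [discriminate|lia].
    + destruct (Hmax w n) as [b [d [Hd [Hb [Hdd Jbd]]]]]; [lia|auto|].
      destruct Hdd as [Hdd|Hdd]; [|lia].
      destruct (Nat.eq_dec d 0) as [->|dn].
      * rewrite JS in Jbd. rewrite Hwm in Jbd; [discriminate|lia].
      * apply (Hnc 0%nat d w b); try lia; auto. rewrite JS; auto.
Qed.

Lemma Tri_firstn : forall J V w, Jsym J -> Tri J V -> (1 <= w < length V)%nat ->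
  J (nthv V 0) (nthv V w) = true -> Tri J (firstn (S w) V).
Proof.
  intros J V w JS [H2 [HN [Hc [H0n [Hnc Hmax]]]]] Hw Jw.
  assert (L : length (firstn (S w) V) = S w) by (apply length_firstn_le; lia).
  unfold Tri; rewrite L.
  repeat split.
  - lia.
  - apply NoDup_firstn'; auto.
  - intros k Hk; rewrite !nthv_firstn by lia; apply Hc; lia.
  - rewrite !nthv_firstn by lia. replace (S w - 1)%nat with w by lia; auto.
  - intros a b c d Habc Hcd; rewrite !nthv_firstn by lia; apply Hnc; lia.
  - intros a c Hac; rewrite !nthv_firstn by lia; intros Jf.
    destruct (Hmax a c) as [b [d [Hd [Hb [Hdd Jbd]]]]]; [lia|auto|].
    destruct (le_lt_dec d w) as [dw|dw].
    + exists b, d; rewrite !nthv_firstn by lia; repeat split; auto; lia.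
    + exfalso. apply (Hnc 0%nat b w d); try lia; auto.
Qed.

Lemma Tri_skipn : forall J V w, Jsym J -> Tri J V -> (w < length V - 1)%nat ->
  J (nthv V w) (nthv V (length V - 1)) = true -> Tri J (skipn w V).
Proof.
  intros J V w JS [H2 [HN [Hc [H0n [Hnc Hmax]]]]] Hw Jw.
  assert (L : length (skipn w V) = (length V - w)%nat) by (rewrite length_skipn; auto).
  unfold Tri; rewrite L.
  repeat split.
  - lia.
  - apply NoDup_skipn'; auto.
  - intros k Hk; rewrite !nthv_skipn. replace (w + S k)%nat with (S (w + k)) by lia. apply Hc; lia.
  - rewrite !nthv_skipn. replace (w + 0)%nat with w by lia.
    replace (w + (length V - w - 1))%nat with (length V - 1)%nat by lia. auto.
  - intros a b c d Habc Hcd; rewrite !nthv_skipn; apply Hnc; lia.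
  - intros a c Hac; rewrite !nthv_skipn; intros Jf.
    destruct (Hmax (w + a) (w + c))%nat as [b [d [Hd [Hb [Hdd Jbd]]]]]; [lia|auto|].
    destruct (le_lt_dec w d) as [dw|dw].
    + exists (b - w)%nat, (d - w)%nat; rewrite !nthv_skipn.
      replace (w + (b - w))%nat with b by lia. replace (w + (d - w))%nat with d by lia.
      repeat split; auto; lia.
    + exfalso. apply (Hnc d w b (length V - 1)%nat); try lia; auto. rewrite JS; auto.
Qed.

Lemma straddle : forall J V w x y, Jsym J -> Tri J V -> (0 < w < length V - 1)%nat ->
  J (nthv V 0) (nthv V w) = true -> J (nthv V w) (nthv V (length V - 1)) = true ->
  (x < w < y)%nat -> (y < length V)%nat -> J (nthv V x) (nthv V y) = true ->
  x = 0%nat /\ y = (length V - 1)%nat.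
Proof.
  intros J V w x y JS [H2 [HN [Hc [H0n [Hnc Hmax]]]]] Hw J0 J1 Hxy Hy Jxy.
  split.
  - destruct (Nat.eq_dec x 0); auto. exfalso. apply (Hnc 0%nat x w y); auto; lia.
  - destruct (Nat.eq_dec y (length V - 1)); auto. exfalso.
    apply (Hnc x w y (length V - 1)%nat); auto; lia.
Qed.

Lemma classify : forall J V w i j k, Jsym J -> Tri J V -> (0 < w < length V - 1)%nat ->
  J (nthv V 0) (nthv V w) = true -> J (nthv V w) (nthv V (length V - 1)) = true ->
  (i < length V)%nat -> (j < length V)%nat -> (k < length V)%nat ->
  i <> j -> i <> k -> j <> k ->
  J (nthv V i) (nthv V j) = true -> J (nthv V i) (nthv V k) = true -> J (nthv V j) (nthv V k) = true ->
  ((i <= w /\ j <= w /\ k <= w) \/ (w <= i /\ w <= j /\ w <= k) \/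
   ((i = 0 \/ i = w \/ i = length V - 1) /\ (j = 0 \/ j = w \/ j = length V - 1) /\
    (k = 0 \/ k = w \/ k = length V - 1)))%nat.
Proof.
  intros J V w i j k JS HT Hw J0 J1 Hi Hj Hk Dij Dik Djk Jij Jik Jjk.
  assert (S1 : forall x y, (x < length V)%nat -> (y < length V)%nat -> J (nthv V x) (nthv V y) = true ->
     (x < w)%nat -> (w < y)%nat -> x = 0%nat /\ y = (length V - 1)%nat).
  { intros x y Hx Hy Jxy H1 H2. eapply straddle; eauto. }
  assert (Jji : J (nthv V j) (nthv V i) = true) by (rewrite JS; auto).
  assert (Jki : J (nthv V k) (nthv V i) = true) by (rewrite JS; auto).
  assert (Jkj : J (nthv V k) (nthv V j) = true) by (rewrite JS; auto).
  pose proof (S1 i j Hi Hj Jij) as P1. pose proof (S1 j i Hj Hi Jji) as P2.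
  pose proof (S1 i k Hi Hk Jik) as P3. pose proof (S1 k i Hk Hi Jki) as P4.
  pose proof (S1 j k Hj Hk Jjk) as P5. pose proof (S1 k j Hk Hj Jkj) as P6.
  clear S1 Jij Jji Jik Jki Jjk Jkj J0 J1 HT JS.
  set (n := (length V - 1)%nat) in *. assert (Hn : n = (length V - 1)%nat) by reflexivity.
  clearbody n.
  destruct (lt_eq_lt_dec i w) as [[hi|hi]|hi]; destruct (lt_eq_lt_dec j w) as [[hj|hj]|hj];
  destruct (lt_eq_lt_dec k w) as [[hk|hk]|hk];
  repeat match goal with
    | H : ?a -> ?b -> _, Ha : ?a, Hb : ?b |- _ => specialize (H Ha Hb)
    | H : _ /\ _ |- _ => destruct H
    end;
  repeat match goal with H : _ -> _ |- _ => clear H end;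
  first [ left; repeat split; lia | right; left; repeat split; lia
        | right; right; repeat split; lia | exfalso; lia ].
Qed.

Lemma In_firstn_idx : forall V w t, NoDup V -> (t < length V)%nat -> (w < length V)%nat ->
  In (nthv V t) (firstn (S w) V) <-> (t <= w)%nat.
Proof.
  intros V w t HN Ht Hw. split.
  - intros H. apply In_nthv in H. destruct H as [k [Hk E]].
    rewrite length_firstn_le in Hk by lia. rewrite nthv_firstn in E by lia.
    apply nthv_inj in E; auto; lia.
  - intros H. rewrite <- (nthv_firstn V (S w) t) by lia. apply nthv_In.
    rewrite length_firstn_le; lia.
Qed.

Lemma In_skipn_idx : forall V w t, NoDup V -> (t < length V)%nat -> (w < length V)%nat ->
  In (nthv V t) (skipn w V) <-> (w <= t)%nat.
Proof.
  intros V w t HN Ht Hw. split.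
  - intros H. apply In_nthv in H. destruct H as [k [Hk E]].
    rewrite length_skipn in Hk. rewrite nthv_skipn in E.
    apply nthv_inj in E; auto; lia.
  - intros H. replace t with (w + (t - w))%nat by lia. rewrite <- nthv_skipn. apply nthv_In.
    rewrite length_skipn; lia.
Qed.

Lemma In_tri_idx : forall V a b c t, NoDup V -> (t < length V)%nat -> (a < length V)%nat ->
  (b < length V)%nat -> (c < length V)%nat ->
  In (nthv V t) [nthv V a; nthv V b; nthv V c] <-> (t = a \/ t = b \/ t = c)%nat.
Proof.
  intros. simpl. split.
  - intros [E|[E|[E|[]]]]; apply nthv_inj in E; auto.
  - intros [E|[E|E]]; subst; auto.
Qed.


Lemma tri3_any : forall J x y z v, Jsym J ->
  x <> y -> x <> z -> y <> z -> J x y = true -> J x z = true -> J y z = true ->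
  (v = x \/ v = y \/ v = z) -> cnt J [x; y; z] v = 1%nat.
Proof.
  intros J x y z v JS Dxy Dxz Dyz Jxy Jxz Jyz [ -> | [ -> | -> ] ].
  - apply tri3; auto.
  - rewrite (cnt_perm J _ [y; x; z]).
    + apply tri3; auto; rewrite JS; auto.
    + repeat constructor; simpl; intuition.
    + repeat constructor; simpl; intuition.
    + intros; simpl; tauto.
  - rewrite (cnt_perm J _ [z; x; y]).
    + apply tri3; auto; rewrite JS; auto.
    + repeat constructor; simpl; intuition.
    + repeat constructor; simpl; intuition.
    + intros; simpl; tauto.
Qed.

Ltac smalllia :=
  repeat match goal with
  | H : _ /\ _ |- _ => destruct H
  | H : _ \/ _ |- _ => destruct H
  end; lia.

Lemma cnt_decomp : forall J V w k, Jsym J -> Tri J V -> (0 < w < length V - 1)%nat ->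
  J (nthv V 0) (nthv V w) = true -> J (nthv V w) (nthv V (length V - 1)) = true ->
  (k < length V)%nat ->
  cnt J V (nthv V k) =
    ((if (k <=? w)%nat then cnt J (firstn (S w) V) (nthv V k) else 0) +
     (if (w <=? k)%nat then cnt J (skipn w V) (nthv V k) else 0) +
     (if ((k =? 0) || (k =? w) || (k =? length V - 1))%nat then 1 else 0))%nat.
Proof.
  intros J V w k JS HT Hw J0 J1 Hk.
  pose proof HT as [H2 [HN [Hc [H0n [Hnc Hmax]]]]].
  set (n := (length V - 1)%nat) in *.
  set (W1 := if (k <=? w)%nat then firstn (S w) V else []).
  set (W2 := if (w <=? k)%nat then skipn w V else []).
  set (W3 := if ((k =? 0) || (k =? w) || (k =? n))%nat then [nthv V 0; nthv V w; nthv V n] else []).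
  assert (D0w : nthv V 0 <> nthv V w) by (intros E; apply nthv_inj in E; auto; lia).
  assert (D0n : nthv V 0 <> nthv V n) by (intros E; apply nthv_inj in E; auto; lia).
  assert (Dwn : nthv V w <> nthv V n) by (intros E; apply nthv_inj in E; auto; lia).
  assert (E : cnt J V (nthv V k) = (cnt J W1 (nthv V k) + cnt J W2 (nthv V k) + cnt J W3 (nthv V k))%nat).
  2: { rewrite E. unfold W1, W2, W3.
       destruct (k <=? w)%nat, (w <=? k)%nat, ((k =? 0) || (k =? w) || (k =? n))%nat eqn:Ek;
       try rewrite cnt_nil; auto;
       rewrite (tri3_any J); auto; rewrite !orb_true_iff, !Nat.eqb_eq in Ek; destruct Ek as [[Ek|Ek]|Ek];
       subst; auto. }
  assert (M1 : forall t, (t < length V)%nat -> In (nthv V t) W1 <-> (k <= w /\ t <= w)%nat).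
  { intros t Ht; unfold W1; destruct (Nat.leb_spec k w).
    - rewrite In_firstn_idx; auto; try lia; try tauto.
    - simpl; lia. }
  assert (M2 : forall t, (t < length V)%nat -> In (nthv V t) W2 <-> (w <= k /\ w <= t)%nat).
  { intros t Ht; unfold W2; destruct (Nat.leb_spec w k).
    - rewrite In_skipn_idx; auto; try lia; try tauto.
    - simpl; lia. }
  assert (M3 : forall t, (t < length V)%nat -> In (nthv V t) W3 <->
     ((k = 0 \/ k = w \/ k = n) /\ (t = 0 \/ t = w \/ t = n))%nat).
  { intros t Ht; unfold W3. destruct ((k =? 0) || (k =? w) || (k =? n))%nat eqn:Ek;
    rewrite ?orb_true_iff, ?orb_false_iff, ?Nat.eqb_eq, ?Nat.eqb_neq in Ek.
    - rewrite In_tri_idx by (auto; lia). tauto.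
    - simpl. tauto. }
  assert (IW : forall W y, incl W V -> In y W -> exists t, (t < length V)%nat /\ y = nthv V t).
  { intros W y HW Hy. apply HW, In_nthv in Hy. destruct Hy as [t [Ht Et]]; eauto. }
  assert (I1 : incl W1 V).
  { unfold W1; destruct (k <=? w)%nat; [|intros x []]. intros x Hx.
    rewrite <- (firstn_skipn (S w) V). apply in_or_app; auto. }
  assert (I2 : incl W2 V).
  { unfold W2; destruct (w <=? k)%nat; [|intros x []]. intros x Hx.
    rewrite <- (firstn_skipn w V). apply in_or_app; auto. }
  assert (I3 : incl W3 V).
  { unfold W3; destruct ((k =? 0) || (k =? w) || (k =? n))%nat; [|intros x []].
    intros x [Hx|[Hx|[Hx|[]]]]; subst; apply nthv_In; lia. }
  assert (TP : forall y z, tp J (nthv V k) (y, z) = true -> In y V -> In z V ->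
     exists iy iz, (iy < length V)%nat /\ (iz < length V)%nat /\ y = nthv V iy /\ z = nthv V iz /\
       iy <> k /\ iz <> k /\ iy <> iz /\
       J (nthv V k) (nthv V iy) = true /\ J (nthv V k) (nthv V iz) = true /\
       J (nthv V iy) (nthv V iz) = true).
  { intros y z Ht Hy Hz. apply In_nthv in Hy, Hz. destruct Hy as [iy [Hiy Ey]], Hz as [iz [Hiz Ez]].
    subst. exists iy, iz. apply tp_true in Ht. destruct Ht as [L [Ny [Nz [A [B C]]]]].
    repeat split; auto; intros ->; auto.
    rewrite vlt_irrefl in L; discriminate. }
  apply cnt3; auto.
  - unfold W1; destruct (k <=? w)%nat; [apply NoDup_firstn'; auto|constructor].
  - unfold W2; destruct (w <=? k)%nat; [apply NoDup_skipn'; auto|constructor].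
  - unfold W3; destruct ((k =? 0) || (k =? w) || (k =? n))%nat; [|constructor].
    repeat constructor; simpl; intuition.
  - intros y z Hy Hz Ht. destruct (TP y z Ht Hy Hz) as [iy [iz [Hiy [Hiz [-> [-> [N1 [N2 [N3 [Ja [Jb Jc]]]]]]]]]]].
    rewrite (M1 iy), (M1 iz), (M2 iy), (M2 iz), (M3 iy), (M3 iz) by auto.
    pose proof (classify J V w k iy iz JS HT Hw J0 J1 Hk Hiy Hiz) as Cl.
    fold n in Cl. specialize (Cl (fun e => N1 (eq_sym e)) (fun e => N2 (eq_sym e)) N3 Ja Jb Jc).
    destruct Cl as [C|[C|C]]; [left | right; left | right; right]; destruct C as (c1 & c2 & c3);
    repeat split; auto.
  - intros y z Ht Hy Hz Hy' Hz'.
    destruct (IW W1 y I1 Hy) as [iy [Hiy ->]]. destruct (IW W1 z I1 Hz) as [iz [Hiz ->]].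
    destruct (TP _ _ Ht) as [iy' [iz' [Hiy' [Hiz' [Ey [Ez [N1 [N2 [N3 _]]]]]]]]]; try (apply nthv_In; auto).
    apply nthv_inj in Ey; auto; apply nthv_inj in Ez; auto; subst.
    rewrite M1 in Hy, Hz by auto. rewrite M2 in Hy', Hz' by auto. smalllia.
  - intros y z Ht Hy Hz Hy' Hz'.
    destruct (IW W1 y I1 Hy) as [iy [Hiy ->]]. destruct (IW W1 z I1 Hz) as [iz [Hiz ->]].
    destruct (TP _ _ Ht) as [iy' [iz' [Hiy' [Hiz' [Ey [Ez [N1 [N2 [N3 _]]]]]]]]]; try (apply nthv_In; auto).
    apply nthv_inj in Ey; auto; apply nthv_inj in Ez; auto; subst.
    rewrite M1 in Hy, Hz by auto. rewrite M3 in Hy', Hz' by auto. smalllia.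
  - intros y z Ht Hy Hz Hy' Hz'.
    destruct (IW W2 y I2 Hy) as [iy [Hiy ->]]. destruct (IW W2 z I2 Hz) as [iz [Hiz ->]].
    destruct (TP _ _ Ht) as [iy' [iz' [Hiy' [Hiz' [Ey [Ez [N1 [N2 [N3 _]]]]]]]]]; try (apply nthv_In; auto).
    apply nthv_inj in Ey; auto; apply nthv_inj in Ez; auto; subst.
    rewrite M2 in Hy, Hz by auto. rewrite M3 in Hy', Hz' by auto. smalllia.
Qed.

Definition negI := mk (-1) 0 0 (-1).

Lemma rot_negI : forall A B, det A = 1 -> mmul A B = negI -> mmul B A = negI.
Proof.
  intros [a b c d] [e f g h]; unfold det, mmul, negI; cbn [m00 m01 m10 m11]; intros Hd H.
  injection H; intros H4 H3 H2 H1.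
  (* B = - adj A *)
  assert (E1 : e = -d).
  { assert (E : e * (a * d - b * c) = d * (a * e + b * g) - b * (c * e + d * g)) by ring.
    rewrite Hd, H1, H3 in E. lia. }
  assert (E2 : f = b).
  { assert (E : f * (a * d - b * c) = d * (a * f + b * h) - b * (c * f + d * h)) by ring.
    rewrite Hd, H2, H4 in E. lia. }
  assert (E3 : g = c).
  { assert (E : g * (a * d - b * c) = a * (c * e + d * g) - c * (a * e + b * g)) by ring.
    rewrite Hd, H1, H3 in E. lia. }
  assert (E4 : h = -a).
  { assert (E : h * (a * d - b * c) = a * (c * f + d * h) - c * (a * f + b * h)) by ring.
    rewrite Hd, H2, H4 in E. lia. }
  subst. apply mat_eq; cbn [m00 m01 m10 m11]; nia.
Qed.

Lemma MqMq0 : mmul (Mq 0) (Mq 0) = negI.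
Proof. apply mat_eq; reflexivity. Qed.

Lemma key_alg : forall A B x y,
  m00 (mmul (mmul B (Mq (x + y + 1))) A) =
  m00 B * m00 (mmul (Mq x) A) + m00 B * m00 A + m00 A * m00 (mmul B (Mq y)).
Proof. intros [a b c d] [e f g h] x y; unfold mmul, Mq; cbn [m00 m01 m10 m11]; ring. Qed.

Lemma negI_r : forall K y, mmul K (Mq y) = negI -> m00 K = 0.
Proof. intros [a b c d] y H. apply (f_equal m01) in H. unfold mmul, Mq, negI in H; cbn [m00 m01 m10 m11] in *. lia. Qed.
Lemma negI_l : forall K y, mmul (Mq y) K = negI -> m00 K = 0.
Proof. intros [a b c d] y H. apply (f_equal m10) in H. unfold mmul, Mq, negI in H; cbn [m00 m01 m10 m11] in *. lia. Qed.

Lemma G0 : forall J V, Gp J V ->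
  mmul (mmul (Mq (cz J V (nthv V (length V - 1)))) (PrV (cz J V) (interior V)))
       (Mq (cz J V (nthv V 0))) = negI.
Proof. intros J V G. rewrite <- MqMq0. rewrite <- G. reflexivity. Qed.

Lemma W1 : forall J V i, Tri J V -> Gp J V -> (i < length V - 1)%nat ->
  m00 (mmul (Mq (cz J V (nthv V (length V - 1)))) (PrV (cz J V) (sub V (S i) (length V - 1))))
  = Fz J V 0 i.
Proof.
  intros J V i HT G Hi. pose proof (G0 J V G) as H. unfold interior in H.
  set (c := cz J V) in *. set (n := (length V - 1)%nat) in *.
  destruct (Nat.eq_dec i 0) as [->|ni].
  - unfold Fz. rewrite Nat.ltb_irrefl. eapply negI_r; eauto.
  - rewrite (sub_split V 1 i n) in H by lia. rewrite PrV_app in H. simpl in H.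
    set (P1 := PrV c (sub V 1 i)) in *. set (P2 := PrV c (sub V (S i) n)) in *.
    assert (H' : mmul (mmul (Mq (c (nthv V n))) P2) (mmul (mmul (Mq (c (nthv V i))) P1) (Mq (c (nthv V 0)))) = negI).
    { rewrite <- H. rewrite !mmul_assoc. reflexivity. }
    apply rot_negI in H'.
    2: { rewrite det_mul, det_Mq. unfold P2; rewrite det_PrV; ring. }
    apply inv_lemma in H'; [|unfold P1; apply det_PrV].
    rewrite H'. unfold Fz, F. replace (0 <? i)%nat with true by (symmetry; apply Nat.ltb_lt; lia). auto.
Qed.

Lemma W2 : forall J V j, Tri J V -> Gp J V -> (0 < j <= length V - 1)%nat ->
  m00 (mmul (PrV (cz J V) (sub V 1 j)) (Mq (cz J V (nthv V 0)))) = Fz J V j (length V - 1).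
Proof.
  intros J V j HT G Hj. pose proof (G0 J V G) as H. unfold interior in H.
  set (c := cz J V) in *. set (n := (length V - 1)%nat) in *.
  destruct (Nat.eq_dec j n) as [->|nj].
  - unfold Fz. rewrite Nat.ltb_irrefl.
    rewrite <- mmul_assoc in H. eapply negI_l; eauto.
  - rewrite (sub_split V 1 j n) in H by lia. rewrite PrV_app in H. simpl in H.
    set (P1 := PrV c (sub V 1 j)) in *. set (P2 := PrV c (sub V (S j) n)) in *.
    assert (H' : mmul (mmul (mmul (Mq (c (nthv V n))) P2) (Mq (c (nthv V j)))) (mmul P1 (Mq (c (nthv V 0)))) = negI).
    { rewrite <- H. rewrite !mmul_assoc. reflexivity. }
    apply inv_lemma in H'; [|unfold P2; apply det_PrV].
    rewrite H'. unfold Fz, F. replace (j <? n)%nat with true by (symmetry; apply Nat.ltb_lt; lia). auto.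
Qed.

Lemma veqb_refl : forall v, veqb v v = true.
Proof. intros; apply veqb_spec; auto. Qed.

Lemma cnt_two : forall J x y v, (v = x \/ v = y) -> cnt J [x; y] v = 0%nat.
Proof.
  intros J x y v Hv. unfold cnt. simpl.
  destruct Hv as [->| ->]; unfold tp; rewrite ?veqb_refl, ?vlt_irrefl; simpl;
  rewrite ?andb_false_r; simpl; auto;
  destruct (vlt y x), (vlt x y), (veqb x y), (veqb y x); simpl; rewrite ?andb_false_r; auto.
Qed.

Lemma Fz_nonneg_of : forall J V, (forall i j, (i < j < length V)%nat -> 1 <= F J V i j) ->
  forall i j, (j < length V)%nat -> 0 <= Fz J V i j.
Proof.
  intros J V H i j Hj. unfold Fz. destruct (Nat.ltb_spec i j); [|lia].
  specialize (H i j). lia.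
Qed.

Lemma Fz_pos_of : forall J V, (forall i j, (i < j < length V)%nat -> 1 <= F J V i j) ->
  forall i j, (i < j < length V)%nat -> 1 <= Fz J V i j.
Proof.
  intros J V H i j Hj. unfold Fz. destruct (Nat.ltb_spec i j); [|lia]. apply H; lia.
Qed.

Lemma PrV_sub_ext : forall (f g : vtx -> Z) V a b,
  (forall k, (a <= k < b)%nat -> f (nthv V k) = g (nthv V k)) ->
  PrV f (sub V a b) = PrV g (sub V a b).
Proof.
  intros. apply PrV_ext. intros x Hx. apply In_sub in Hx. destruct Hx as [k [Hk ->]]. apply H; auto.
Qed.

Lemma poly_main : forall J, Jsym J -> forall N V, length V = N -> Tri J V ->
  Gp J V /\ (forall i j, (i < j < length V)%nat -> 1 <= F J V i j /\
                        (F J V i j = 1 <-> J (nthv V i) (nthv V j) = true)).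
Proof.
  intros J JS N. induction N as [N IH] using lt_wf_ind. intros V HL HT.
  pose proof HT as [H2 [HN [Hc [H0n [Hnc Hmax]]]]].
  destruct (Nat.eq_dec (length V) 2) as [E2|E3].
  -
    destruct V as [|x [|y [|z V]]]; simpl in E2; try lia.
    assert (C : forall v, v = x \/ v = y -> cz J [x; y] v = 0).
    { intros v Hv; unfold cz; rewrite cnt_two; auto. }
    split.
    + intros X Y. unfold interior, sub; simpl. unfold nthv; simpl.
      rewrite !C by auto. rewrite !Z.add_0_r. rewrite mmul_I_r. auto.
    + intros i j Hij. simpl in Hij. assert (i = 0%nat /\ j = 1%nat) as [-> ->] by lia.
      unfold F, sub; simpl. split; [lia|]. split; intros; [|reflexivity].
      apply (Hc 0%nat); simpl; lia.
  -
    destruct (apex J V JS HT) as [w [Hw [J0 J1]]]; [lia|].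
    set (n := (length V - 1)%nat) in *. assert (Hn : n = (length V - 1)%nat) by reflexivity.
    set (V1 := firstn (S w) V). set (V2 := skipn w V).
    assert (L1 : length V1 = S w) by (apply length_firstn_le; lia).
    assert (L2 : length V2 = (length V - w)%nat) by (unfold V2; rewrite length_skipn; auto).
    assert (T1 : Tri J V1) by (apply Tri_firstn; auto; lia).
    assert (T2 : Tri J V2) by (apply Tri_skipn; auto; lia).
    destruct (IH (S w) ltac:(lia) V1 L1 T1) as [G1 P1].
    destruct (IH (length V - w)%nat ltac:(lia) V2 L2 T2) as [G2 P2].
    set (c := cz J V). set (c1 := cz J V1). set (c2 := cz J V2).
    assert (CD : forall k, (k < length V)%nat -> c (nthv V k) =
      (if (k <=? w)%nat then c1 (nthv V k) else 0) + (if (w <=? k)%nat then c2 (nthv V k) else 0) +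
      (if ((k =? 0) || (k =? w) || (k =? n))%nat then 1 else 0)).
    { intros k Hk. unfold c, c1, c2, cz. rewrite (cnt_decomp J V w k JS HT Hw J0 J1 Hk).
      fold n. fold V1 V2.
      destruct (k <=? w)%nat, (w <=? k)%nat, ((k =? 0) || (k =? w) || (k =? n))%nat; lia. }
    assert (Ci1 : forall k, (0 < k < w)%nat -> c (nthv V k) = c1 (nthv V k)).
    { intros k Hk. rewrite CD by lia.
      destruct (Nat.leb_spec k w); destruct (Nat.leb_spec w k); try lia.
      destruct (Nat.eqb_spec k 0), (Nat.eqb_spec k w), (Nat.eqb_spec k n); simpl; lia. }
    assert (Ci2 : forall k, (w < k < n)%nat -> c (nthv V k) = c2 (nthv V k)).
    { intros k Hk. rewrite CD by lia.
      destruct (Nat.leb_spec k w); destruct (Nat.leb_spec w k); try lia.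
      destruct (Nat.eqb_spec k 0), (Nat.eqb_spec k w), (Nat.eqb_spec k n); simpl; lia. }
    assert (C0 : c (nthv V 0) = c1 (nthv V 0) + 1).
    { rewrite CD by lia. destruct (Nat.leb_spec 0 w); destruct (Nat.leb_spec w 0); try lia. simpl. lia. }
    assert (Cn : c (nthv V n) = c2 (nthv V n) + 1).
    { rewrite CD by lia. destruct (Nat.leb_spec n w); destruct (Nat.leb_spec w n); try lia.
      rewrite Nat.eqb_refl, !orb_true_r. lia. }
    assert (Cw : c (nthv V w) = c1 (nthv V w) + c2 (nthv V w) + 1).
    { rewrite CD by lia. rewrite Nat.leb_refl, Nat.eqb_refl, orb_true_r. simpl. lia. }
    assert (N1 : forall t, (t <= w)%nat -> nthv V1 t = nthv V t) by (intros; apply nthv_firstn; lia).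
    assert (N2 : forall t, nthv V2 t = nthv V (w + t)) by (intros; apply nthv_skipn).
    assert (S1 : forall a b, (b <= S w)%nat -> sub V1 a b = sub V a b) by (intros; apply sub_firstn; auto).
    assert (S2 : forall a b, sub V2 a b = sub V (w + a) (w + b)) by (intros; apply sub_skipn).
    split.
    +
      intros X Y.
      assert (GA : forall X Y, mmul (mmul (Mq (X + c1 (nthv V w))) (PrV c1 (sub V 1 w))) (Mq (Y + c1 (nthv V 0)))
                   = mmul (Mq X) (Mq Y)).
      { intros X' Y'. pose proof (G1 X' Y') as G. unfold interior in G. rewrite L1 in G.
        replace (S w - 1)%nat with w in G by lia. rewrite S1, !N1 in G by lia. exact G. }
      assert (GB : forall X Y, mmul (mmul (Mq (X + c2 (nthv V n))) (PrV c2 (sub V (S w) n))) (Mq (Y + c2 (nthv V w)))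
                   = mmul (Mq X) (Mq Y)).
      { intros X' Y'. pose proof (G2 X' Y') as G. unfold interior in G. rewrite L2 in G.
        rewrite S2, !N2 in G. replace (w + (length V - w - 1))%nat with n in G by lia.
        replace (w + 1)%nat with (S w) in G by lia. replace (w + 0)%nat with w in G by lia. exact G. }
      unfold interior. fold n. fold c.
      rewrite (sub_split V 1 w n) by lia. rewrite PrV_app. simpl.
      rewrite (PrV_sub_ext c c1 V 1 w) by (intros; apply Ci1; lia).
      rewrite (PrV_sub_ext c c2 V (S w) n) by (intros; apply Ci2; lia).
      rewrite Cn, C0, Cw.
      set (Q1 := PrV c1 (sub V 1 w)). set (Q2 := PrV c2 (sub V (S w) n)).
      replace (X + (c2 (nthv V n) + 1)) with ((X + 1) + c2 (nthv V n)) by lia.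
      replace (c1 (nthv V w) + c2 (nthv V w) + 1) with ((c1 (nthv V w) + 1) + c2 (nthv V w)) by lia.
      replace (Y + (c1 (nthv V 0) + 1)) with ((Y + 1) + c1 (nthv V 0)) by lia.
      rewrite !mmul_assoc. rewrite GB.
      rewrite <- !mmul_assoc. rewrite (mmul_assoc (Mq (c1 (nthv V w) + 1))).
      replace (c1 (nthv V w) + 1) with (1 + c1 (nthv V w)) by lia.
      rewrite GA. rewrite !mmul_assoc. replace (Mq 1) with (Mq (0 + 1)) by auto.
      apply tri_id.
    +
      assert (Fnn1 := Fz_nonneg_of J V1 (fun i j h => proj1 (P1 i j h))).
      assert (Fnn2 := Fz_nonneg_of J V2 (fun i j h => proj1 (P2 i j h))).
      intros i j Hij.
      destruct (le_lt_dec j w) as [jw|wj].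
      *
        assert (E : F J V i j = F J V1 i j).
        { unfold F. rewrite S1 by lia. fold c c1. apply f_equal, PrV_sub_ext. intros; apply Ci1; lia. }
        rewrite E. rewrite <- (N1 i), <- (N1 j) by lia. apply P1; lia.
      * destruct (le_lt_dec w i) as [wi|iw].
        -- assert (E : F J V i j = F J V2 (i - w) (j - w)).
           { unfold F. rewrite S2. replace (w + S (i - w))%nat with (S i) by lia.
             replace (w + (j - w))%nat with j by lia. fold c c2. apply f_equal, PrV_sub_ext.
             intros; apply Ci2; lia. }
           rewrite E. replace (nthv V i) with (nthv V2 (i - w)) by (rewrite N2; f_equal; lia).
           replace (nthv V j) with (nthv V2 (j - w)) by (rewrite N2; f_equal; lia).
           apply P2; lia.
        --
           set (j' := (j - w)%nat). set (n2 := (length V2 - 1)%nat).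
           assert (EW1 := W1 J V1 i T1 G1 ltac:(lia)).
           rewrite L1 in EW1. replace (S w - 1)%nat with w in EW1 by lia.
           rewrite S1, N1 in EW1 by lia. fold c1 in EW1.
           assert (EW2 := W2 J V2 j' T2 G2 ltac:(lia)).
           rewrite S2, N2 in EW2. replace (w + 1)%nat with (S w) in EW2 by lia.
           replace (w + j')%nat with j in EW2 by lia. replace (w + 0)%nat with w in EW2 by lia.
           fold c2 n2 in EW2.
           assert (EA : F J V1 i w = m00 (PrV c1 (sub V (S i) w))).
           { unfold F. rewrite S1 by lia. auto. }
           assert (EB : F J V2 0 j' = m00 (PrV c2 (sub V (S w) j))).
           { unfold F. rewrite S2. replace (w + 1)%nat with (S w) by lia.
             replace (w + j')%nat with j by lia. auto. }
           assert (EF : F J V i j = F J V2 0 j' * Fz J V1 0 i + F J V2 0 j' * F J V1 i w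
                                     + F J V1 i w * Fz J V2 j' n2).
           { unfold F at 1. fold c. rewrite (sub_split V (S i) w j) by lia. rewrite PrV_app. cbn [PrV].
             rewrite (PrV_sub_ext c c1 V (S i) w) by (intros; apply Ci1; lia).
             rewrite (PrV_sub_ext c c2 V (S w) j) by (intros; apply Ci2; lia).
             rewrite Cw. rewrite key_alg. rewrite EW1, EW2, EA, EB. ring. }
           assert (PA := P1 i w ltac:(lia)). rewrite N1, N1 in PA by lia.
           assert (PB := P2 0%nat j' ltac:(lia)). rewrite N2, N2 in PB.
           replace (w + 0)%nat with w in PB by lia. replace (w + j')%nat with j in PB by lia.
           assert (f1 := Fnn1 0%nat i ltac:(lia)). assert (f2 := Fnn2 j' n2 ltac:(lia)).
           split.
           ++ rewrite EF. nia.
           ++ split.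
              ** intros E1. rewrite EF in E1.
                 assert (A1 : F J V1 i w = 1 /\ F J V2 0 j' = 1 /\ Fz J V1 0 i = 0 /\ Fz J V2 j' n2 = 0) by nia.
                 destruct A1 as [_ [_ [Z1 Z2]]].
                 assert (i = 0)%nat.
                 { destruct (Nat.eq_dec i 0); auto. pose proof (Fz_pos_of J V1 (fun i j h => proj1 (P1 i j h)) 0 i ltac:(lia)). lia. }
                 assert (j' = n2).
                 { destruct (Nat.eq_dec j' n2); auto. pose proof (Fz_pos_of J V2 (fun i j h => proj1 (P2 i j h)) j' n2 ltac:(lia)). lia. }
                 subst i. replace j with n by lia. auto.
              ** intros Jij.
                 destruct (straddle J V w i j JS HT Hw J0 J1 ltac:(lia) ltac:(lia) Jij) as [-> Ej].
                 fold n in Ej. subst j.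
                 rewrite EF. rewrite (proj2 (proj2 PA) J0). rewrite (proj2 (proj2 PB)) by (subst j'; auto).
                 unfold Fz. rewrite Nat.ltb_irrefl.
                 replace j' with n2 by lia. rewrite Nat.ltb_irrefl. ring.
Qed.

Lemma length_zrange : forall a b, length (zrange a b) = Z.to_nat (b - a + 1).
Proof. intros; unfold zrange; rewrite length_map, length_seq; auto. Qed.

Lemma nth_map_seq' : forall (A : Type) (f : nat -> A) s n t d, (t < n)%nat ->
  nth t (map f (seq s n)) d = f (s + t)%nat.
Proof.
  intros A f s n; revert s; induction n; intros s t d H; [lia|].
  destruct t; simpl. f_equal; lia. rewrite IHn by lia. f_equal; lia.
Qed.

Lemma nth_zrange : forall a b t d, (t < Z.to_nat (b - a + 1))%nat -> nth t (zrange a b) d = a + Z.of_nat t.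
Proof.
  intros. unfold zrange. rewrite nth_map_seq'; auto.
Qed.

Lemma In_zrange : forall a b x, In x (zrange a b) <-> a <= x <= b.
Proof.
  intros; unfold zrange; rewrite in_map_iff. split.
  - intros [n [E Hn]]. apply in_seq in Hn. lia.
  - intros H. exists (Z.to_nat (x - a)). split; [lia|]. apply in_seq. lia.
Qed.

Definition inP (p q r s : Z) (v : vtx) : Prop :=
  match v with U u => p <= u <= r | L x => s <= x <= q end.

Lemma In_strip : forall p q r s v, In v (strip_poly p q r s) <-> inP p q r s v.
Proof.
  intros p q r s [u|x]; unfold strip_poly; rewrite in_app_iff, !in_map_iff; simpl; split.
  - intros [[y [E H]]|[y [E H]]]; try discriminate. injection E; intros; subst. apply In_zrange; auto.
  - intros H. left; exists u; split; auto; apply In_zrange; auto.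
  - intros [[y [E H]]|[y [E H]]]; try discriminate. injection E; intros; subst. apply In_zrange; auto.
  - intros H. right; exists x; split; auto; apply In_zrange; auto.
Qed.

Lemma length_strip : forall p q r s, p <= r -> s <= q ->
  length (strip_poly p q r s) = (Z.to_nat (r - p + 1) + Z.to_nat (q - s + 1))%nat.
Proof. intros; unfold strip_poly; rewrite length_app, !length_map, !length_zrange; auto. Qed.

Lemma nthv_strip : forall p q r s t, p <= r -> s <= q ->
  (t < Z.to_nat (r - p + 1) + Z.to_nat (q - s + 1))%nat ->
  nthv (strip_poly p q r s) t =
    if (t <? Z.to_nat (r - p + 1))%nat then U (p + Z.of_nat t)
    else L (s + Z.of_nat (t - Z.to_nat (r - p + 1))).
Proof.
  intros p q r s t Hpr Hsq Ht. unfold nthv, strip_poly.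
  destruct (Nat.ltb_spec t (Z.to_nat (r - p + 1))).
  - rewrite app_nth1 by (rewrite length_map, length_zrange; auto).
    rewrite (map_nth U (zrange p r) 0). rewrite nth_zrange; auto.
  - rewrite app_nth2 by (rewrite length_map, length_zrange; auto).
    rewrite length_map, length_zrange.
    rewrite nth_indep with (d' := L 0) by (rewrite length_map, length_zrange; lia).
    rewrite (map_nth L (zrange s q) 0). rewrite nth_zrange; auto. lia.
Qed.

Lemma vlt_strip : forall p q r s t1 t2, p <= r -> s <= q ->
  (t1 < t2 < Z.to_nat (r - p + 1) + Z.to_nat (q - s + 1))%nat ->
  vlt (nthv (strip_poly p q r s) t1) (nthv (strip_poly p q r s) t2) = true.
Proof.
  intros. rewrite !nthv_strip by (auto; lia).
  destruct (Nat.ltb_spec t1 (Z.to_nat (r - p + 1))), (Nat.ltb_spec t2 (Z.to_nat (r - p + 1)));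
  simpl; auto; try (apply Z.ltb_lt; lia); lia.
Qed.

Lemma NoDup_strip : forall p q r s, p <= r -> s <= q -> NoDup (strip_poly p q r s).
Proof.
  intros p q r s H1 H2. apply (NoDup_nth _ (U 0)). intros i j Hi Hj E.
  rewrite length_strip in Hi, Hj by auto.
  destruct (Nat.lt_trichotomy i j) as [h|[h|h]]; auto; exfalso.
  - pose proof (vlt_strip p q r s i j H1 H2 ltac:(lia)). unfold nthv in H. rewrite E, vlt_irrefl in H. discriminate.
  - pose proof (vlt_strip p q r s j i H1 H2 ltac:(lia)). unfold nthv in H. rewrite E, vlt_irrefl in H. discriminate.
Qed.

Lemma strip_index : forall p q r s v, p <= r -> s <= q -> inP p q r s v ->
  exists t, (t < length (strip_poly p q r s))%nat /\ nthv (strip_poly p q r s) t = v.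
Proof.
  intros. apply In_nthv. apply In_strip; auto.
Qed.

Lemma vlt_index : forall p q r s t1 t2, p <= r -> s <= q ->
  (t1 < length (strip_poly p q r s))%nat -> (t2 < length (strip_poly p q r s))%nat ->
  vlt (nthv (strip_poly p q r s) t1) (nthv (strip_poly p q r s) t2) = true -> (t1 < t2)%nat.
Proof.
  intros p q r s t1 t2 H1 H2 Ht1 Ht2 V. rewrite length_strip in Ht1, Ht2 by auto.
  destruct (Nat.lt_trichotomy t1 t2) as [h|[h|h]]; auto; exfalso.
  - subst. rewrite vlt_irrefl in V; discriminate.
  - pose proof (vlt_strip p q r s t2 t1 H1 H2 ltac:(lia)). rewrite vlt_asym in V; auto; discriminate.
Qed.

Definition adjb (v w : vtx) : bool :=
  match v, w with
  | U a, U b => (b =? a + 1) || (a =? b + 1)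
  | L a, L b => (b =? a + 1) || (a =? b + 1)
  | _, _ => false
  end.
Definition Jst (T : arcset) (v w : vtx) : bool := joined_in T v w || adjb v w.

Ltac zsimpl := repeat match goal with
  | H : context [?a <? ?b] |- _ => destruct (Z.ltb_spec a b)
  | |- context [?a <? ?b] => destruct (Z.ltb_spec a b)
  | H : context [?a =? ?b] |- _ => destruct (Z.eqb_spec a b)
  | |- context [?a =? ?b] => destruct (Z.eqb_spec a b)
  end.

Lemma arc_of_sym : forall v w, arc_of v w = arc_of w v.
Proof. intros [a|a] [b|b]; simpl; auto; zsimpl; auto; lia. Qed.

Lemma Jst_sym : forall T, Jsym (Jst T).
Proof.
  intros T a b. unfold Jst, joined_in. rewrite arc_of_sym. f_equal.
  destruct a, b; simpl; auto; apply orb_comm.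
Qed.

Lemma crosses_conn : forall p q p' q', crosses (Conn p q) (Conn p' q') <->
  (p < p' /\ q < q') \/ (p' < p /\ q' < q).
Proof.
  intros; simpl. split.
  - intros H. destruct (Z.lt_trichotomy p p') as [h|[h|h]].
    + assert (q - q' < 0) by (destruct (Z.lt_trichotomy (q - q') 0) as [h'|[h'|h']]; [auto| rewrite h' in H; lia | nia]). lia.
    + subst. rewrite Z.sub_diag in H. lia.
    + assert (q - q' > 0) by (destruct (Z.lt_trichotomy (q - q') 0) as [h'|[h'|h']]; [nia| rewrite h' in H; lia | lia]). lia.
  - intros [[h1 h2]|[h1 h2]]; nia.
Qed.

Lemma crosses_irrefl : forall x, ~ crosses x x.
Proof. intros [p q|a b|a b]; simpl; try lia. Qed.

Definition ends (x : arc) : vtx * vtx :=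
  match x with Conn p q => (U p, L q) | Up a b => (U a, U b) | Low a b => (L a, L b) end.

Lemma arc_of_ends : forall x, valid_arc x -> arc_of (fst (ends x)) (snd (ends x)) = Some x.
Proof. intros [p q|a b|a b]; simpl; intros; auto; zsimpl; auto; lia. Qed.

Lemma vlt_ends : forall x, valid_arc x -> vlt (fst (ends x)) (snd (ends x)) = true.
Proof. intros [p q|a b|a b]; simpl; intros; auto; apply Z.ltb_lt; lia. Qed.

Ltac vtx_case := repeat match goal with v : vtx |- _ => destruct v end.

Lemma interleave_crosses : forall v1 v2 v3 v4 x y,
  vlt v1 v2 = true -> vlt v2 v3 = true -> vlt v3 v4 = true ->
  arc_of v1 v3 = Some x -> arc_of v2 v4 = Some y -> crosses x y.
Proof.
  intros v1 v2 v3 v4 x y H1 H2 H3 E1 E2.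
  vtx_case; simpl in *; try discriminate; zsimpl; try lia;
  injection E1; injection E2; intros; subst; try (apply crosses_conn); simpl; lia.
Qed.

Lemma arc_dec : forall x y : arc, {x = y} + {x <> y}.
Proof. decide equality; apply Z.eq_dec. Qed.

Definition Tnc (T : arcset) := forall x y, T x = true -> T y = true -> ~ crosses x y.

Lemma Tnc_of : forall T, triangulation T -> Tnc T.
Proof.
  intros T [_ [H _]] x y Tx Ty C. destruct (arc_dec x y) as [->|n].
  - apply (crosses_irrefl y C).
  - apply (H x y Tx Ty n C).
Qed.

Lemma prod_pos_iff : forall a b, a * b > 0 <-> (a > 0 /\ b > 0) \/ (a < 0 /\ b < 0).
Proof.
  intros a b; split.
  - intros H. destruct (Z.lt_trichotomy a 0) as [h|[h|h]]; destruct (Z.lt_trichotomy b 0) as [h'|[h'|h']];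
    subst; try lia; nia.
  - intros [[h1 h2]|[h1 h2]]; nia.
Qed.

Lemma inside_cross : forall p q r s v1 v2 x y,
  p <= r -> s <= q -> inP p q r s v1 -> inP p q r s v2 -> vlt v1 v2 = true -> arc_of v1 v2 = Some x ->
  valid_arc y -> crosses x y -> ~ crosses y (Conn p q) -> ~ crosses y (Conn r s) ->
  inP p q r s (fst (ends y)) /\ inP p q r s (snd (ends y)) /\
  ((vlt v1 (fst (ends y)) = true /\ vlt (fst (ends y)) v2 = true /\ vlt v2 (snd (ends y)) = true) \/
   (vlt (fst (ends y)) v1 = true /\ vlt v1 (snd (ends y)) = true /\ vlt (snd (ends y)) v2 = true)).
Proof.
  intros p q r s v1 v2 x y Hpr Hsq I1 I2 L E Vy C N1 N2.
  vtx_case; destruct y as [c d|c d|c d]; simpl in *; try discriminate; zsimpl; try lia;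
  injection E; intros; subst; rewrite ?prod_pos_iff in *; simpl in *; zsimpl; repeat match goal with H : _ * _ > 0 |- _ => apply prod_pos_iff in H end; lia.
Qed.

Lemma joined_arc : forall T v w, joined_in T v w = true -> exists x, arc_of v w = Some x /\ T x = true.
Proof. intros T v w H; unfold joined_in in H; destruct (arc_of v w) as [x|]; [exists x; auto|discriminate]. Qed.

Lemma sep : forall T c1 c2 y z, Tnc T -> T (Conn c1 c2) = true -> Jst T y z = true ->
  vlt (U c1) y = true -> vlt y (L c2) = true -> (vlt z (U c1) = true \/ vlt (L c2) z = true) -> False.
Proof.
  intros T c1 c2 y z Hnc Tc J H1 H2 H3.
  unfold Jst in J. apply orb_true_iff in J. destruct J as [J|J].
  - apply joined_arc in J. destruct J as [x [Ex Tx]].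
    destruct H3 as [H3|H3].
    + apply (Hnc x (Conn c1 c2)); auto.
      apply (interleave_crosses z (U c1) y (L c2)); auto. rewrite arc_of_sym; auto.
    + apply (Hnc (Conn c1 c2) x); auto.
      apply (interleave_crosses (U c1) y (L c2) z); auto.
  - vtx_case; simpl in *; try discriminate; zsimpl; simpl in *; try discriminate; destruct H3; try discriminate; zsimpl; lia.
Qed.

Lemma adj_between : forall a b c, vlt a b = true -> vlt b c = true -> adjb a c = true -> False.
Proof. intros a b c H1 H2 H3; vtx_case; simpl in *; try discriminate; zsimpl; simpl in *; try discriminate; lia. Qed.

Lemma Tri_strip : forall T p q r s, triangulation T -> p <= r -> s <= q ->
  T (Conn p q) = true -> T (Conn r s) = true -> Tri (Jst T) (strip_poly p q r s).
Proof.
  intros T p q r s HT Hpr Hsq Tpq Trs.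
  pose proof (Tnc_of T HT) as Hnc.
  pose proof (length_strip p q r s Hpr Hsq) as Len.
  set (P := strip_poly p q r s) in *.
  set (nU := Z.to_nat (r - p + 1)) in *.
  assert (NF := nthv_strip p q r s). fold P nU in NF.
  unfold Tri. repeat split.
  - lia.
  - apply NoDup_strip; auto.
  - intros k Hk. rewrite !NF by (auto; lia).
    destruct (Nat.ltb_spec k nU), (Nat.ltb_spec (S k) nU); try lia.
    + unfold Jst. apply orb_true_iff; right. unfold adjb. apply orb_true_iff; left. apply Z.eqb_eq; lia.
    + assert (k = nU - 1)%nat by lia. subst k. replace (S (nU - 1) - nU)%nat with 0%nat by lia.
      replace (p + Z.of_nat (nU - 1)) with r by lia. rewrite Z.add_0_r.
      unfold Jst, joined_in; simpl. rewrite Trs; auto.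
    + unfold Jst. apply orb_true_iff; right. unfold adjb. apply orb_true_iff; left. apply Z.eqb_eq; lia.
  - rewrite !NF by (auto; lia). destruct (Nat.ltb_spec 0 nU); try lia.
    destruct (Nat.ltb_spec (length P - 1) nU); try lia.
    replace (p + Z.of_nat 0) with p by lia.
    replace (s + Z.of_nat (length P - 1 - nU)) with q by lia. unfold Jst, joined_in; simpl. rewrite Tpq; auto.
  - intros a b c d Habc Hcd J1 J2.
    assert (V1 := vlt_strip p q r s a b Hpr Hsq ltac:(lia)).
    assert (V2 := vlt_strip p q r s b c Hpr Hsq ltac:(lia)).
    assert (V3 := vlt_strip p q r s c d Hpr Hsq ltac:(lia)). fold P in V1, V2, V3.
    unfold Jst in J1, J2. apply orb_true_iff in J1, J2.
    destruct J1 as [J1|J1]; [|exact (adj_between _ _ _ V1 V2 J1)].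
    destruct J2 as [J2|J2]; [|exact (adj_between _ _ _ V2 V3 J2)].
    apply joined_arc in J1, J2. destruct J1 as [x [Ex Tx]], J2 as [y [Ey Ty]].
    apply (Hnc x y); auto. apply (interleave_crosses (nthv P a) (nthv P b) (nthv P c) (nthv P d)); auto.
  - intros a c Hac Jf.
    destruct HT as [Hval [_ [Hmax _]]].
    assert (Va : In (nthv P a) P) by (apply nthv_In; lia).
    assert (Vc : In (nthv P c) P) by (apply nthv_In; lia).
    apply In_strip in Va, Vc.
    assert (L := vlt_strip p q r s a c Hpr Hsq ltac:(lia)). fold P in L.
    unfold Jst in Jf. apply orb_false_iff in Jf. destruct Jf as [Jf Af].
    set (va := nthv P a) in *. set (vc := nthv P c) in *.
    assert (EX : exists x, arc_of va vc = Some x /\ valid_arc x).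
    { clear - L Af. destruct va, vc; simpl in *; try discriminate; zsimpl; try lia;
      eexists; split; eauto; simpl; auto; lia. }
    destruct EX as [x [Ex Vx]].
    assert (Tx : T x = false) by (unfold joined_in in Jf; rewrite Ex in Jf; auto).
    destruct (Hmax x Vx Tx) as [y [Ty [Nxy Cxy]]].
    assert (Vy : valid_arc y) by (apply Hval; auto).
    assert (N1 : ~ crosses y (Conn p q)) by (apply Hnc; auto).
    assert (N2 : ~ crosses y (Conn r s)) by (apply Hnc; auto).
    destruct (inside_cross p q r s va vc x y Hpr Hsq Va Vc L Ex Vy Cxy N1 N2) as [I1 [I2 IL]].
    destruct (strip_index p q r s _ Hpr Hsq I1) as [t1 [Ht1 E1]].
    destruct (strip_index p q r s _ Hpr Hsq I2) as [t2 [Ht2 E2]]. fold P in Ht1, Ht2, E1, E2.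
    assert (Jy : Jst T (nthv P t1) (nthv P t2) = true).
    { unfold Jst, joined_in. rewrite E1, E2, arc_of_ends, Ty; auto. }
    destruct IL as [[A1 [A2 A3]]|[A1 [A2 A3]]].
    + exists t1, t2. repeat split; auto.
      * rewrite <- E1 in A1. apply vlt_index in A1; auto; unfold P in *; lia.
      * rewrite <- E1 in A2. apply vlt_index in A2; auto; unfold P in *; lia.
      * right. rewrite <- E2 in A3. apply vlt_index in A3; auto; unfold P in *; lia.
    + exists t2, t1. repeat split; auto.
      * rewrite <- E2 in A2. apply vlt_index in A2; auto; unfold P in *; lia.
      * rewrite <- E2 in A3. apply vlt_index in A3; auto; unfold P in *; lia.
      * left. rewrite <- E1 in A1. apply vlt_index in A1; auto; unfold P in *; lia.
      * rewrite Jst_sym; auto.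
Qed.


Lemma adj_idx : forall p q r s k l, p <= r -> s <= q ->
  (k < length (strip_poly p q r s))%nat -> (l < length (strip_poly p q r s))%nat ->
  adjb (nthv (strip_poly p q r s) k) (nthv (strip_poly p q r s) l) = true -> l = S k \/ k = S l.
Proof.
  intros p q r s k l H1 H2 Hk Hl A. rewrite length_strip in Hk, Hl by auto.
  rewrite !nthv_strip in A by auto.
  destruct (Nat.ltb_spec k (Z.to_nat (r - p + 1))), (Nat.ltb_spec l (Z.to_nat (r - p + 1)));
  simpl in A; try discriminate; apply orb_true_iff in A; rewrite !Z.eqb_eq in A; lia.
Qed.

Lemma polyE_Jst : forall T p q r s k l, triangulation T -> p <= r -> s <= q ->
  T (Conn p q) = true -> T (Conn r s) = true ->
  (k < length (strip_poly p q r s))%nat -> (l < length (strip_poly p q r s))%nat ->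
  poly_E T (strip_poly p q r s) k l = Jst T (nthv (strip_poly p q r s) k) (nthv (strip_poly p q r s) l).
Proof.
  intros T p q r s k l HT H1 H2 T1 T2 Hk Hl.
  pose proof (Tri_strip T p q r s HT H1 H2 T1 T2) as [_ [_ [Hc [H0n _]]]].
  set (P := strip_poly p q r s) in *. set (N := length P) in *.
  assert (JS := Jst_sym T).
  unfold poly_E. fold N. fold (nthv P k). fold (nthv P l).
  assert (EQ : forall x y, (y = (x + 1) mod N)%nat -> (x < N)%nat -> Jst T (nthv P x) (nthv P y) = true).
  { intros x y E Hx. destruct (Nat.eq_dec (S x) N) as [e|ne].
    - replace (x + 1)%nat with N in E by lia. rewrite Nat.Div0.mod_same in E by lia. subst y.
      rewrite JS. replace x with (N - 1)%nat by lia. auto.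
    - rewrite Nat.mod_small in E by lia. subst y. replace (x + 1)%nat with (S x) by lia. apply Hc. lia. }
  destruct (Nat.eqb_spec l ((k + 1) mod N)) as [e|ne].
  - simpl. symmetry. apply EQ; auto.
  - destruct (Nat.eqb_spec k ((l + 1) mod N)) as [e'|ne'].
    + simpl. symmetry. rewrite JS. apply EQ; auto.
    + simpl. unfold Jst. destruct (adjb (nthv P k) (nthv P l)) eqn:A; [|rewrite orb_false_r; auto].
      exfalso. apply adj_idx in A; auto. destruct A as [A|A]; subst.
      * apply ne. rewrite Nat.mod_small; lia.
      * apply ne'. rewrite Nat.mod_small; lia.
Qed.

Lemma map_nthv_seq : forall V, map (nthv V) (seq 0 (length V)) = V.
Proof.
  intros V. apply (nth_ext _ _ (U 0) (U 0)).
  - rewrite length_map, length_seq; auto.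
  - intros n Hn. rewrite length_map, length_seq in Hn. rewrite nth_map_seq' by auto. auto.
Qed.

Lemma list_prod_map : forall (A B : Type) (f : A -> B) (l : list A),
  list_prod (map f l) (map f l) = map (fun ab => (f (fst ab), f (snd ab))) (list_prod l l).
Proof.
  intros A B f l. generalize l at 2 4. intros l2. induction l; simpl; auto.
  rewrite IHl, map_app, !map_map. simpl. auto.
Qed.

Lemma length_filter_map : forall (A B : Type) (g : B -> bool) (h : A -> B) l,
  length (filter g (map h l)) = length (filter (fun x => g (h x)) l).
Proof. intros; induction l; simpl; auto. destruct (g (h a)); simpl; auto. Qed.

Lemma length_filter_ext_in : forall (A : Type) (f g : A -> bool) l,
  (forall x, In x l -> f x = g x) -> length (filter f l) = length (filter g l).
Proof. intros; rewrite (filter_ext_in f g); auto. Qed.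

Lemma tricount_cnt : forall T p q r s t, triangulation T -> p <= r -> s <= q ->
  T (Conn p q) = true -> T (Conn r s) = true ->
  (t < length (strip_poly p q r s))%nat ->
  tri_count (length (strip_poly p q r s)) (poly_E T (strip_poly p q r s)) t =
  cnt (Jst T) (strip_poly p q r s) (nthv (strip_poly p q r s) t).
Proof.
  intros T p q r s t HT H1 H2 T1 T2 Ht.
  assert (HN := NoDup_strip p q r s H1 H2).
  set (P := strip_poly p q r s) in *. set (N := length P) in *.
  assert (PE : forall a b, (a < N)%nat -> (b < N)%nat -> poly_E T P a b = Jst T (nthv P a) (nthv P b))
    by (intros; apply polyE_Jst; auto).
  unfold tri_count, cnt. rewrite <- (map_nthv_seq P) at 2 3. fold N.
  rewrite list_prod_map, length_filter_map.
  apply length_filter_ext_in. intros [y z] Hyz. apply in_prod_iff in Hyz.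
  destruct Hyz as [Hy Hz]. apply in_seq in Hy, Hz. simpl.
  unfold tp. rewrite !PE by lia.
  f_equal. f_equal. f_equal. f_equal.
  - f_equal.
    + destruct (Nat.ltb_spec y z).
      * symmetry. apply vlt_strip; auto. rewrite <- length_strip by auto. fold P N; lia.
      * destruct (vlt (nthv P y) (nthv P z)) eqn:V; auto. apply vlt_index in V; auto; try lia; subst P N; lia.
    + f_equal. destruct (Nat.eqb_spec y t), (veqb (nthv P y) (nthv P t)) eqn:E; auto.
      * subst. rewrite veqb_false in E. tauto.
      * apply veqb_spec in E. apply nthv_inj in E; auto; unfold N in *; lia.
  - f_equal. destruct (Nat.eqb_spec z t), (veqb (nthv P z) (nthv P t)) eqn:E; auto.
    + subst. rewrite veqb_false in E. tauto.
    + apply veqb_spec in E. apply nthv_inj in E; auto; unfold N in *; lia.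
Qed.

Lemma sub_last : forall V x y, (x <= y)%nat -> sub V x (S y) = sub V x y ++ [nthv V y].
Proof.
  intros. rewrite (sub_split V x y (S y)) by lia. unfold sub at 2. rewrite Nat.sub_diag. auto.
Qed.

Lemma sub_empty : forall V x, sub V x x = [].
Proof. intros; unfold sub; rewrite Nat.sub_diag; auto. Qed.

Lemma frz_PrV : forall (a : nat -> Z) (g : vtx -> Z) V k d,
  (forall x, (x < length V)%nat -> a x = g (nthv V x)) -> (k + d < length V)%nat ->
  frz (length V) a k d = (m10 (PrV g (sub V (S k) (S k + d))), m00 (PrV g (sub V (S k) (S k + d)))).
Proof.
  intros a g V k d Ha. induction d; intros Hd.
  - simpl. rewrite Nat.add_0_r, sub_empty. reflexivity.
  - simpl frz. rewrite IHd by lia.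
    replace (S k + S d)%nat with (S (S k + d)) by lia. rewrite sub_last by lia.
    rewrite PrV_app. simpl PrV. rewrite mmul_I_l.
    rewrite Nat.mod_small by lia. rewrite Ha by lia.
    replace (k + d + 1)%nat with (S k + d)%nat by lia.
    unfold mmul, Mq; cbn [m00 m01 m10 m11]. f_equal; ring.
Qed.

Definition pathUL (i j r s : Z) : list vtx := map U (zrange (i + 1) r) ++ map L (zrange s (j - 1)).

Lemma sub_app : forall V x m y, (x <= m <= y)%nat -> sub V x y = sub V x m ++ sub V m y.
Proof.
  intros. unfold sub. replace (y - x)%nat with ((m - x) + (y - m))%nat by lia.
  rewrite seq_app, map_app. replace (x + (m - x))%nat with m by lia. auto.
Qed.

Lemma map_seq_shift0 : forall (f : nat -> vtx) w n, map f (seq w n) = map (fun k => f (w + k)%nat) (seq 0 n).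
Proof. intros. rewrite map_seq_shift. rewrite Nat.add_0_r. auto. Qed.

Lemma path_sub : forall p q r s i j, p <= i <= r -> s <= j <= q ->
  sub (strip_poly p q r s) (S (Z.to_nat (i - p))) (Z.to_nat (r - p + 1 + (j - s))) = pathUL i j r s.
Proof.
  intros p q r s i j Hi Hj.
  set (P := strip_poly p q r s). set (nU := Z.to_nat (r - p + 1)).
  rewrite (sub_app P _ nU) by lia. unfold pathUL. f_equal.
  - unfold sub, zrange. rewrite map_map.
    replace (nU - S (Z.to_nat (i - p)))%nat with (Z.to_nat (r - (i + 1) + 1)) by lia.
    rewrite (map_seq_shift0 (nthv P)).
    apply map_ext_seq. intros k Hk. unfold P. rewrite nthv_strip by lia. fold nU.
    destruct (Nat.ltb_spec (S (Z.to_nat (i - p)) + k) nU); [|lia]. f_equal. lia.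
  - unfold sub, zrange. rewrite map_map.
    replace (Z.to_nat (r - p + 1 + (j - s)) - nU)%nat with (Z.to_nat (j - 1 - s + 1)) by lia.
    rewrite (map_seq_shift0 (nthv P)).
    apply map_ext_seq. intros k Hk. unfold P. rewrite nthv_strip by lia. fold nU.
    destruct (Nat.ltb_spec (nU + k) nU); [lia|]. f_equal. lia.
Qed.

Lemma Phi_F : forall T p q r s i j, triangulation T -> admissible T p q r s i j ->
  Phi_val T p q r s i j = F (Jst T) (strip_poly p q r s) (Z.to_nat (i - p)) (Z.to_nat (r - p + 1 + (j - s))).
Proof.
  intros T p q r s i j HT [T1 [T2 [Hi Hj]]].
  assert (Len := length_strip p q r s ltac:(lia) ltac:(lia)).
  set (P := strip_poly p q r s) in *. set (k := Z.to_nat (i - p)). set (l := Z.to_nat (r - p + 1 + (j - s))).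
  unfold Phi_val, friese. fold P. fold k l.
  replace ((l + length P - k) mod length P)%nat with (l - k)%nat.
  2: { replace (l + length P - k)%nat with ((l - k) + 1 * length P)%nat by lia.
       rewrite Nat.Div0.mod_add, Nat.mod_small; lia. }
  rewrite (frz_PrV _ (cz (Jst T) P)).
  - simpl. replace (k + (l - k))%nat with l by lia. rewrite sub_last by lia.
    rewrite PrV_app. simpl PrV. rewrite mmul_I_l. unfold F. unfold mmul, Mq; cbn [m00 m01 m10 m11]. ring.
  - intros x Hx. unfold cz, P. rewrite tricount_cnt; auto; lia.
  - lia.
Qed.

Lemma Phi_path : forall T p q r s i j, triangulation T -> admissible T p q r s i j ->
  Phi_val T p q r s i j = m00 (PrV (cz (Jst T) (strip_poly p q r s)) (pathUL i j r s)).
Proof.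
  intros T p q r s i j HT Ha. rewrite Phi_F by auto. unfold F.
  destruct Ha as [_ [_ [Hi Hj]]]. rewrite path_sub; auto; lia.
Qed.

Definition sin (r1 s1 : Z) (v : vtx) : Prop := match v with U u => r1 < u | L x => x < s1 end.
Definition sout (r1 s1 : Z) (v : vtx) : Prop := match v with U u => u < r1 | L x => s1 < x end.

Lemma sep' : forall T r1 s1 y z, Tnc T -> T (Conn r1 s1) = true -> Jst T y z = true ->
  sin r1 s1 y -> sout r1 s1 z -> False.
Proof.
  intros T r1 s1 y z Hnc Tc J Hy Hz.
  apply (sep T r1 s1 y z Hnc Tc J).
  - destruct y; simpl in *; auto; apply Z.ltb_lt; auto.
  - destruct y; simpl in *; auto; apply Z.ltb_lt; auto.
  - destruct z; simpl in *; [left|right]; apply Z.ltb_lt; auto.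
Qed.

Lemma sep2 : forall T r1 s1 y z, Tnc T -> T (Conn r1 s1) = true -> Jst T y z = true ->
  ~ (sin r1 s1 y /\ sout r1 s1 z) /\ ~ (sin r1 s1 z /\ sout r1 s1 y).
Proof.
  intros. split; intros [A B].
  - eapply sep'; eauto.
  - eapply (sep' T r1 s1 z y); eauto. rewrite Jst_sym; auto.
Qed.

Lemma In_path : forall i j r s v, In v (pathUL i j r s) <->
  match v with U u => i + 1 <= u <= r | L x => s <= x <= j - 1 end.
Proof.
  intros. unfold pathUL. rewrite in_app_iff, !in_map_iff. destruct v as [u|x]; split.
  - intros [[y [E H]]|[y [E H]]]; try discriminate. injection E; intros; subst. apply In_zrange; auto.
  - intros H; left; exists u; split; auto; apply In_zrange; auto.
  - intros [[y [E H]]|[y [E H]]]; try discriminate. injection E; intros; subst. apply In_zrange; auto.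
  - intros H; right; exists x; split; auto; apply In_zrange; auto.
Qed.

Lemma incl_strip : forall p q r s p' q' r' s', p <= p' -> r' <= r -> s <= s' -> q' <= q ->
  incl (strip_poly p' q' r' s') (strip_poly p q r s).
Proof. intros; intros v; rewrite !In_strip; destruct v; simpl; lia. Qed.

Lemma left_cut : forall T p q r s p1 q1 i j, triangulation T -> admissible T p q r s i j ->
  T (Conn p1 q1) = true -> p <= p1 < i -> j < q1 <= q ->
  Phi_val T p q r s i j = Phi_val T p1 q1 r s i j.
Proof.
  intros T p q r s p1 q1 i j HT Ha T1 H1 H2.
  pose proof Ha as [Tpq [Trs [Hi Hj]]].
  assert (Ha' : admissible T p1 q1 r s i j) by (repeat split; auto; lia).
  pose proof (Tnc_of T HT) as Hnc.
  rewrite !Phi_path by auto. f_equal. apply PrV_ext. intros v Hv. unfold cz. f_equal.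
  apply In_path in Hv.
  apply cnt_sub.
  - apply NoDup_strip; lia.
  - apply NoDup_strip; lia.
  - apply incl_strip; lia.
  - assert (inner : forall w, In w (strip_poly p q r s) -> Jst T v w = true -> In w (strip_poly p1 q1 r s)).
    { intros w Hw Jw. rewrite In_strip in *.
      destruct (sep2 T p1 q1 v w Hnc T1 Jw) as [A B].
      destruct v, w; simpl in *; lia. }
    intros y z Hy Hz Ht. apply tp_true in Ht. destruct Ht as (_ & _ & _ & Jy & Jz & _).
    split; apply inner; auto.
Qed.

Lemma map_seq_shiftZ : forall (f : nat -> Z) w n, map f (seq w n) = map (fun k => f (w + k)%nat) (seq 0 n).
Proof.
  intros f w n; revert w; induction n; intros w; simpl; auto. rewrite Nat.add_0_r. f_equal.
  rewrite IHn. rewrite <- seq_shift, map_map. apply map_ext. intros; f_equal; lia.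
Qed.

Lemma zrange_split : forall a b m, a <= m <= b -> zrange a b = zrange a (m - 1) ++ m :: zrange (m + 1) b.
Proof.
  intros a b m H. unfold zrange.
  replace (Z.to_nat (b - a + 1)) with (Z.to_nat (m - 1 - a + 1) + S (Z.to_nat (b - (m + 1) + 1)))%nat by lia.
  rewrite seq_app, map_app. f_equal. simpl. f_equal; [lia|].
  rewrite map_seq_shiftZ. apply map_ext. intros; lia.
Qed.

Lemma zrange_empty : forall a, zrange a (a - 1) = [].
Proof. intros; unfold zrange. replace (Z.to_nat (a - 1 - a + 1)) with 0%nat by lia. auto. Qed.

Lemma zrange_nil : forall a b, b < a -> zrange a b = [].
Proof. intros; unfold zrange. replace (Z.to_nat (b - a + 1)) with 0%nat by lia. auto. Qed.

Lemma right_cut : forall T p q r s r1 s1 i j, triangulation T -> admissible T p q r s i j ->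
  T (Conn r1 s1) = true -> i < r1 <= r -> s <= s1 < j ->
  Phi_val T p q r s i j = Phi_val T p q r1 s1 i j.
Proof.
  intros T p q r s r1 s1 i j HT Ha T1 H1 H2.
  pose proof Ha as [Tpq [Trs [Hi Hj]]].
  assert (Ha' : admissible T p q r1 s1 i j) by (repeat split; auto; lia).
  pose proof (Tnc_of T HT) as Hnc.
  rewrite !Phi_path by auto.
  set (P := strip_poly p q r s). set (P' := strip_poly p q r1 s1). set (Q := strip_poly r1 s1 r s).
  assert (TQ : Tri (Jst T) Q) by (apply Tri_strip; auto; lia).
  destruct (poly_main (Jst T) (Jst_sym T) _ Q eq_refl TQ) as [GQ _].
  assert (LQ := length_strip r1 s1 r s ltac:(lia) ltac:(lia)). fold Q in LQ.
  assert (FQ : nthv Q 0 = U r1).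
  { unfold Q; rewrite nthv_strip by lia. destruct (Nat.ltb_spec 0 (Z.to_nat (r - r1 + 1))); [|lia].
    f_equal; lia. }
  assert (LaQ : nthv Q (length Q - 1) = L s1).
  { rewrite LQ. unfold Q; rewrite nthv_strip by lia.
    destruct (Nat.ltb_spec (Z.to_nat (r - r1 + 1) + Z.to_nat (s1 - s + 1) - 1) (Z.to_nat (r - r1 + 1))); [lia|]. f_equal; lia. }
  assert (IQ : interior Q = pathUL r1 s1 r s).
  { unfold interior. rewrite <- (path_sub r1 s1 r s r1 s1) by lia.
    replace (S (Z.to_nat (r1 - r1))) with 1%nat by lia. f_equal. lia. }
  unfold Gp in GQ. rewrite FQ, LaQ, IQ in GQ.
  set (A := map U (zrange (i + 1) (r1 - 1))). set (B := map L (zrange (s1 + 1) (j - 1))).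
  set (QI := pathUL r1 s1 r s) in *.
  assert (E1 : pathUL i j r s = A ++ U r1 :: (QI ++ L s1 :: B)).
  { unfold pathUL, A, B, QI. rewrite (zrange_split (i + 1) r r1) by lia.
    rewrite (zrange_split s (j - 1) s1) by lia. rewrite !map_app. simpl. rewrite <- !app_assoc. simpl. unfold pathUL. rewrite <- !app_assoc. auto. }
  assert (E2 : pathUL i j r1 s1 = A ++ U r1 :: L s1 :: B).
  { unfold pathUL, A, B. rewrite (zrange_split (i + 1) r1 r1) by lia.
    rewrite (zrange_split s1 (j - 1) s1) by lia.
    rewrite (zrange_nil (r1 + 1) r1), (zrange_nil s1 (s1 - 1)) by lia.
    rewrite !map_app. simpl. rewrite <- !app_assoc. simpl. auto. }
  rewrite E1, E2. rewrite !PrV_app. cbn [PrV]. rewrite !PrV_app. cbn [PrV].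
  set (cP := cz (Jst T) P). set (cP' := cz (Jst T) P'). set (cQ := cz (Jst T) Q).
  assert (NP : NoDup P) by (apply NoDup_strip; lia).
  assert (NP' : NoDup P') by (apply NoDup_strip; lia).
  assert (NQ : NoDup Q) by (apply NoDup_strip; lia).
  assert (IP' : incl P' P) by (apply incl_strip; lia).
  assert (IQP : incl Q P) by (apply incl_strip; lia).
  assert (SEP : forall y z, Jst T y z = true ->
    ~ (sin r1 s1 y /\ sout r1 s1 z) /\ ~ (sin r1 s1 z /\ sout r1 s1 y)) by (intros; eapply sep2; eauto).
  assert (cOut : forall v, inP p q r1 s1 v -> sout r1 s1 v -> cP v = cP' v).
  { intros v Iv Ov. unfold cP, cP', cz. f_equal. apply cnt_sub; auto.
    intros y z Hy Hz Ht. apply tp_true in Ht. destruct Ht as (_ & _ & _ & Jy & Jz & _).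
    destruct (SEP v y Jy) as [A1 A2]. destruct (SEP v z Jz) as [A3 A4].
    unfold P, P' in *. rewrite !In_strip in *. destruct v, y, z; simpl in *; lia. }
  assert (cIn : forall v, inP r1 s1 r s v -> sin r1 s1 v -> cP v = cQ v).
  { intros v Iv Ov. unfold cP, cQ, cz. f_equal. apply cnt_sub; auto.
    intros y z Hy Hz Ht. apply tp_true in Ht. destruct Ht as (_ & _ & _ & Jy & Jz & _).
    destruct (SEP v y Jy) as [A1 A2]. destruct (SEP v z Jz) as [A3 A4].
    unfold P, Q in *. rewrite !In_strip in *. destruct v, y, z; simpl in *; lia. }
  assert (cCorner : forall v, (v = U r1 \/ v = L s1) -> cP v = cP' v + cQ v).
  { intros v Hv. unfold cP, cP', cQ, cz. rewrite <- Nat2Z.inj_add. f_equal. apply cnt2; auto.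
    - intros y z Hy Hz Ht. apply tp_true in Ht. destruct Ht as (_ & _ & _ & _ & _ & Jyz).
      destruct (SEP y z Jyz) as [A1 A2].
      unfold P, P', Q in *. rewrite !In_strip in *. destruct y, z; simpl in *; lia.
    - intros y z Ht Hy Hz Hy' Hz'. apply tp_true in Ht. destruct Ht as (Lyz & Ny & Nz & _).
      unfold P', Q in *. rewrite !In_strip in *.
      destruct Hv; subst v; destruct y, z; simpl in *; try lia; zsimpl; try discriminate;
      try (apply Ny; f_equal; lia); try (apply Nz; f_equal; lia). }
  rewrite (PrV_ext _ cP cP' A) by (intros v Hv; unfold A in Hv; apply in_map_iff in Hv;
     destruct Hv as [u [<- Hu]]; apply In_zrange in Hu; apply cOut; simpl; lia).
  rewrite (PrV_ext _ cP cP' B) by (intros v Hv; unfold B in Hv; apply in_map_iff in Hv;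
     destruct Hv as [u [<- Hu]]; apply In_zrange in Hu; apply cOut; simpl; lia).
  rewrite (PrV_ext _ cP cQ QI) by (intros v Hv; unfold QI in Hv; apply In_path in Hv;
     apply cIn; destruct v; simpl in *; lia).
  rewrite (cCorner (U r1)), (cCorner (L s1)) by auto.
  rewrite <- (mmul_assoc (PrV cP' B) (Mq _) (PrV cQ QI)).
  rewrite <- (mmul_assoc (PrV cP' B) _ (Mq _)).
  rewrite GQ. rewrite <- (mmul_assoc (PrV cP' B) (Mq (cP' (L s1))) (Mq (cP' (U r1)))). reflexivity.
Qed.

Lemma inner_left : forall T p q p' q' i j, triangulation T ->
  T (Conn p q) = true -> T (Conn p' q') = true -> p < i -> p' < i -> j < q -> j < q' ->
  exists p1 q1, T (Conn p1 q1) = true /\ p <= p1 /\ p' <= p1 /\ p1 < i /\ j < q1 /\ q1 <= q /\ q1 <= q'.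
Proof.
  intros T p q p' q' i j HT T1 T2 H1 H2 H3 H4.
  pose proof (Tnc_of T HT) as Hnc.
  assert (NC := Hnc _ _ T1 T2). rewrite crosses_conn in NC.
  destruct (Z.lt_trichotomy p p') as [h|[h|h]].
  - exists p', q'. repeat split; auto; lia.
  - subst. destruct (Z.le_gt_cases q q').
    + exists p', q. repeat split; auto; lia.
    + exists p', q'. repeat split; auto; lia.
  - exists p, q. repeat split; auto; lia.
Qed.

Lemma inner_right : forall T r s r' s' i j, triangulation T ->
  T (Conn r s) = true -> T (Conn r' s') = true -> i < r -> i < r' -> s < j -> s' < j ->
  exists r1 s1, T (Conn r1 s1) = true /\ i < r1 /\ r1 <= r /\ r1 <= r' /\ s <= s1 /\ s' <= s1 /\ s1 < j.
Proof.
  intros T r s r' s' i j HT T1 T2 H1 H2 H3 H4.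
  pose proof (Tnc_of T HT) as Hnc.
  assert (NC := Hnc _ _ T1 T2). rewrite crosses_conn in NC.
  destruct (Z.lt_trichotomy r r') as [h|[h|h]].
  - exists r, s. repeat split; auto; lia.
  - subst. destruct (Z.le_gt_cases s s').
    + exists r', s'. repeat split; auto; lia.
    + exists r', s. repeat split; auto; lia.
  - exists r', s'. repeat split; auto; lia.
Qed.

Lemma indep : forall T p q r s p' q' r' s' i j, triangulation T ->
  admissible T p q r s i j -> admissible T p' q' r' s' i j ->
  Phi_val T p q r s i j = Phi_val T p' q' r' s' i j.
Proof.
  intros T p q r s p' q' r' s' i j HT Ha Hb.
  pose proof Ha as [Tpq [Trs [Hi Hj]]]. pose proof Hb as [Tpq' [Trs' [Hi' Hj']]].
  destruct (inner_left T p q p' q' i j HT Tpq Tpq' ltac:(lia) ltac:(lia) ltac:(lia) ltac:(lia))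
    as [p1 [q1 [T1 L1]]].
  destruct (inner_right T r s r' s' i j HT Trs Trs' ltac:(lia) ltac:(lia) ltac:(lia) ltac:(lia))
    as [r1 [s1 [T2 L2]]].
  rewrite (left_cut T p q r s p1 q1 i j HT Ha T1) by lia.
  rewrite (left_cut T p' q' r' s' p1 q1 i j HT Hb T1) by lia.
  rewrite (right_cut T p1 q1 r s r1 s1 i j HT) by (auto; repeat split; auto; lia).
  rewrite (right_cut T p1 q1 r' s' r1 s1 i j HT) by (auto; repeat split; auto; lia).
  auto.
Qed.

Lemma exists_adm : forall T i j, triangulation T -> exists p q r s, admissible T p q r s i j.
Proof.
  intros T i j HT. destruct HT as [_ [_ [_ H]]]. destruct (H i j) as [[p [q [T1 [H1 H2]]]] [r [s [T2 [H3 H4]]]]].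
  exists p, q, r, s. repeat split; auto; lia.
Qed.

Lemma cont_id : forall M x y, det M = 1 ->
  m00 (mmul M (Mq x)) * m00 (mmul (Mq y) M) - m00 (mmul (mmul (Mq y) M) (Mq x)) * m00 M = 1.
Proof.
  intros [a b c d] x y H. unfold det in H; unfold mmul, Mq; cbn [m00 m01 m10 m11] in *. nia.
Qed.

Lemma Phi_props : forall T p q r s i j, triangulation T -> admissible T p q r s i j ->
  1 <= Phi_val T p q r s i j /\ (Phi_val T p q r s i j = 1 <-> T (Conn i j) = true).
Proof.
  intros T p q r s i j HT Ha. pose proof Ha as [T1 [T2 [Hi Hj]]].
  rewrite Phi_F by auto.
  assert (TP : Tri (Jst T) (strip_poly p q r s)) by (apply Tri_strip; auto; lia).
  destruct (poly_main (Jst T) (Jst_sym T) _ _ eq_refl TP) as [_ PM].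
  assert (Len := length_strip p q r s ltac:(lia) ltac:(lia)).
  destruct (PM (Z.to_nat (i - p)) (Z.to_nat (r - p + 1 + (j - s))) ltac:(lia)) as [A B].
  split; auto. rewrite B.
  rewrite !nthv_strip by lia.
  destruct (Nat.ltb_spec (Z.to_nat (i - p)) (Z.to_nat (r - p + 1))); [|lia].
  destruct (Nat.ltb_spec (Z.to_nat (r - p + 1 + (j - s))) (Z.to_nat (r - p + 1))); [lia|].
  replace (p + Z.of_nat (Z.to_nat (i - p))) with i by lia.
  replace (s + Z.of_nat (Z.to_nat (r - p + 1 + (j - s)) - Z.to_nat (r - p + 1))) with j by lia.
  unfold Jst; simpl. rewrite orb_false_r. tauto.
Qed.

Lemma SL2_local : forall T p q r s i j, triangulation T ->
  T (Conn p q) = true -> T (Conn r s) = true -> p < i -> i + 1 < r -> s < j -> j + 1 < q ->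
  Phi_val T p q r s i j * Phi_val T p q r s (i + 1) (j + 1)
  - Phi_val T p q r s i (j + 1) * Phi_val T p q r s (i + 1) j = 1.
Proof.
  intros T p q r s i j HT T1 T2 H1 H2 H3 H4.
  rewrite !Phi_F by (auto; repeat split; auto; lia).
  assert (Len := length_strip p q r s ltac:(lia) ltac:(lia)).
  set (P := strip_poly p q r s) in *.
  set (k := Z.to_nat (i - p)). set (l := Z.to_nat (r - p + 1 + (j - s))).
  replace (Z.to_nat (i + 1 - p)) with (S k) by lia.
  replace (Z.to_nat (r - p + 1 + (j + 1 - s))) with (S l) by lia.
  unfold F. set (c := cz (Jst T) P).
  assert (E1 : sub P (S k) l = nthv P (S k) :: sub P (S (S k)) l).
  { rewrite (sub_split P (S k) (S k) l) by lia. rewrite sub_empty. auto. }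
  assert (E2 : sub P (S k) (S l) = nthv P (S k) :: sub P (S (S k)) (S l)).
  { rewrite (sub_split P (S k) (S k) (S l)) by lia. rewrite sub_empty. auto. }
  rewrite E1, E2. rewrite sub_last by lia. cbn [PrV]. rewrite !PrV_app. cbn [PrV]. rewrite !mmul_I_l.
  apply cont_id. apply det_PrV.
Qed.

Theorem proposition4p3 (T : arcset) (HT : triangulation T) :
  (forall i j : Z, exists p q r s, admissible T p q r s i j) /\
  exists t : Z -> Z -> Z,
    (forall i j p q r s, admissible T p q r s i j -> t i j = Phi_val T p q r s i j) /\
    SL2_tiling t /\ enough_ones t /\
    (forall i j : Z, t i j = 1 <-> T (Conn i j) = true).
Proof.
  assert (EA : forall i j, exists z : Z * Z * Z * Z,
             admissible T (fst (fst (fst z))) (snd (fst (fst z))) (snd (fst z)) (snd z) i j).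
  { intros i j. destruct (exists_adm T i j HT) as [p [q [r [s H]]]]. exists (p, q, r, s); auto. }
  set (ch := fun i j => proj1_sig (constructive_indefinite_description _ (EA i j))).
  assert (chP : forall i j, admissible T (fst (fst (fst (ch i j)))) (snd (fst (fst (ch i j))))
                              (snd (fst (ch i j))) (snd (ch i j)) i j).
  { intros i j. unfold ch. destruct (constructive_indefinite_description _ (EA i j)); auto. }
  set (t := fun i j => Phi_val T (fst (fst (fst (ch i j)))) (snd (fst (fst (ch i j))))
                              (snd (fst (ch i j))) (snd (ch i j)) i j).
  assert (tPhi : forall i j p q r s, admissible T p q r s i j -> t i j = Phi_val T p q r s i j).
  { intros. unfold t. apply indep; auto. }
  assert (tone : forall i j, t i j = 1 <-> T (Conn i j) = true).
  { intros. unfold t. apply Phi_props; auto. }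
  split; [intros i j; apply exists_adm; auto|].
  exists t. split; [auto|]. split; [|split; [|auto]].
  - split.
    + intros i j. unfold t. apply Phi_props; auto.
    + intros i j. pose proof HT as [_ [_ [_ H]]].
      destruct (H i (j + 1)) as [[p [q [T1 [H1 H2]]]] _].
      destruct (H (i + 1) j) as [_ [r [s [T2 [H3 H4]]]]].
      rewrite (tPhi i j p q r s), (tPhi (i + 1) (j + 1) p q r s), (tPhi i (j + 1) p q r s),
              (tPhi (i + 1) j p q r s) by (repeat split; auto; lia).
      apply SL2_local; auto; lia.
  - intros i j. pose proof HT as [_ [_ [_ H]]]. destruct (H i j) as [[p [q [T1 [H1 H2]]]] [r [s [T2 [H3 H4]]]]].
    split.
    + exists p, q. split; [lia|split; [lia|apply tone; auto]].
    + exists r, s. split; [lia|split; [lia|apply tone; auto]].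
Qed.
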